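(* Let $T=(\mathcal L,\mathcal R)$ be a GT system and $\mathbf D\subseteq\mathcal G(\mathcal L)$. If all non-garbage critical pairs of $T$ with respect to $\mathbf D$ are strongly joinable, then $T$ is locally confluent on $\mathbf D$.
   Context: Fix a label alphabet $\mathcal L=(\mathcal L_V,\mathcal L_E)$ of finite sets. Graphs are totally labelled: $G=(V,E,s,t,l,m)$ with $V,E$ finite, $s,t:E\to V$, $l:V\to\mathcal L_V$, $m:E\to\mathcal L_E$ total; morphisms preserve sources, targets and labels; $\mathcal G(\mathcal L)$ is the set of isomorphism classes. $H$ is a subgraph of $G$ if there is an inclusion morphism $H\hookrightarrow G$. A rule $\langle L\leftarrow K\rightarrow R\rangle$ consists of such graphs with $K$ a subgraph of $L$ and $R$. A direct derivation $G\Rightarrow_{r,g}H$ uses an injective match $g:L\to G$ satisfying the dangling condition (no edge outside $g(L)$ incident to a node in $g(V_L\setminus V_K)$); it deletes $g(L\setminus K)$ giving $D\subseteq G$, then adds $R\setminus K$ disjointly giving $H\supseteq D$, with comatch $h:R\to H$. A GT system $T=(\mathcal L,\mathcal R)$ has a finite rule set. The track morphism of $G\Rightarrow H$ is the partial map $G\rightharpoonup H$ which is the identity (via $D$) on items of $D$ and undefined elsewhere; tracks of derivation sequences are composites. Steps $H_1\Leftarrow_{r_1,g_1}G\Rightarrow_{r_2,g_2}H_2$ are parallelly independent if $g_1(L_1)\cap g_2(L_2)\subseteq g_1(K_1)\cap g_2(K_2)$. Such a pair is a critical pair if $G=g_1(L_1)\cup g_2(L_2)$, the steps are not parallelly independent,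 and $g_1\ne g_2$ when $r_1=r_2$. Its persistent nodes are the nodes $v$ of $G$ for which both tracks $G\Rightarrow H_1$ and $G\Rightarrow H_2$ are defined. It is strongly joinable if there are a graph $M$ and derivations $H_1\Rightarrow^*M\Leftarrow^*H_2$ such that for every persistent node $v$, the tracks of $G\Rightarrow H_1\Rightarrow^*M$ and $G\Rightarrow H_2\Rightarrow^*M$ are both defined at $v$ and equal. A set $\mathbf D\subseteq\mathcal G(\mathcal L)$ is subgraph closed if $[G]\in\mathbf D$ and $H$ a subgraph of $G$ imply $[H]\in\mathbf D$; the subgraph closure $\overline{\mathbf D}$ is the smallest subgraph-closed set containing $\mathbf D$. A critical pair $H_1\Leftarrow G\Rightarrow H_2$ is non-garbage w.r.t. $\mathbf D$ if $[G]\in\overline{\mathbf D}$. Graphs $H_1,H_2$ are joinable if $H_1\Rightarrow^*M\Leftarrow^*H_2$ for some $M$. $T$ is locally confluent on $\mathbf D$ if for all $G$ with $[G]\in\mathbf D$, $H_1\Leftarrow G\Rightarrow H_2$ implies $H_1,H_2$ joinable. *)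

(* Defs.v *)
(* Graph transformation systems (double-pushout, injective matches). *)
From mathcomp Require Import all_boot.
Set Implicit Arguments. Unset Strict Implicit. Unset Printing Implicit Defensive.

Section GT.
Variables (LV LE : finType).

(* A finite totally labelled graph; nodes/edges are finite sets of nat names.
   Values of src/tgt/lab/mlab outside the node/edge sets are irrelevant junk. *)
Record graph := Graph {
  gV : seq nat; gE : seq nat;
  src : nat -> nat; tgt : nat -> nat;
  lab : nat -> LV; mlab : nat -> LE;
  graph_wf : forall e, e \in gE -> (src e \in gV) && (tgt e \in gV) }.

Definition morph (G H : graph) (fV fE : nat -> nat) : Prop :=
  (forall v, v \in gV G -> fV v \in gV H /\ lab H (fV v) = lab G v) /\
  (forall e, e \in gE G -> [/\ fE e \in gE H, src H (fE e) = fV (src G e),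
                              tgt H (fE e) = fV (tgt G e) & mlab H (fE e) = mlab G e]).

Definition inj_morph (G H : graph) (fV fE : nat -> nat) : Prop :=
  [/\ morph G H fV fE, {in gV G &, injective fV} & {in gE G &, injective fE}].

Definition iso_by (G H : graph) (fV fE : nat -> nat) : Prop :=
  [/\ inj_morph G H fV fE,
      (forall x, x \in gV H -> exists2 v, v \in gV G & fV v = x) &
      (forall x, x \in gE H -> exists2 e, e \in gE G & fE e = x)].

Definition iso (G H : graph) : Prop := exists fV fE, iso_by G H fV fE.

Definition subgraph (H G : graph) : Prop := morph H G id id.

Record rule := Rule {
  rL : graph; rK : graph; rR : graph;
  rule_KL : subgraph rK rL; rule_KR : subgraph rK rR }.

Definition delV (r : rule) (gv : nat -> nat) (x : nat) : bool :=
  has (fun v => (v \notin gV (rK r)) && (gv v == x)) (gV (rL r)).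
Definition delE (r : rule) (ge : nat -> nat) (x : nat) : bool :=
  has (fun e => (e \notin gE (rK r)) && (ge e == x)) (gE (rL r)).

(* items of the intermediate graph D *)
Definition inDV (r : rule) (G : graph) (gv : nat -> nat) (x : nat) : bool :=
  (x \in gV G) && ~~ delV r gv x.
Definition inDE (r : rule) (G : graph) (ge : nat -> nat) (x : nat) : bool :=
  (x \in gE G) && ~~ delE r ge x.

Definition dder (r : rule) (G H : graph) (gv ge hv he : nat -> nat) : Prop :=
  [/\ inj_morph (rL r) G gv ge,
      (forall e, e \in gE G -> ~~ has (fun e' => ge e' == e) (gE (rL r)) ->
         forall v, v \in gV (rL r) -> v \notin gV (rK r) ->
           src G e <> gv v /\ tgt G e <> gv v),
      (forall x, inDV r G gv x -> x \in gV H /\ lab H x = lab G x) /\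
      (forall e, inDE r G ge e -> [/\ e \in gE H, src H e = src G e,
                                     tgt H e = tgt G e & mlab H e = mlab G e]),
      inj_morph (rR r) H hv he /\
      (forall v, v \in gV (rK r) -> hv v = gv v) /\
      (forall e, e \in gE (rK r) -> he e = ge e) &
      [/\ (forall v, v \in gV (rR r) -> v \notin gV (rK r) -> ~~ inDV r G gv (hv v)),
          (forall e, e \in gE (rR r) -> e \notin gE (rK r) -> ~~ inDE r G ge (he e)),
          (forall x, x \in gV H -> inDV r G gv x \/
              exists2 v, v \in gV (rR r) & (v \notin gV (rK r)) && (hv v == x)) &
          (forall x, x \in gE H -> inDE r G ge x \/
              exists2 e, e \in gE (rR r) & (e \notin gE (rK r)) && (he e == x))]].

Definition step_track (r : rule) (G : graph) (gv : nat -> nat) : nat -> option nat :=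
  fun x => if inDV r G gv x then Some x else None.

Record gts := GTS { gts_I : finType; gts_rule : gts_I -> rule }.
Arguments gts_rule : clear implicits.

Definition dstep (T : gts) (G H : graph) : Prop :=
  exists (i : gts_I T) gv ge hv he, dder (gts_rule T i) G H gv ge hv he.

(* G =>* M with node track t (partial map on nodes); a derivation of
   length 0 is an isomorphism (graphs are considered up to isomorphism). *)
Inductive derivs (T : gts) : graph -> graph -> (nat -> option nat) -> Prop :=
| derivs_iso G H fV fE : iso_by G H fV fE ->
    derivs T G H (fun x => if x \in gV G then Some (fV x) else None)
| derivs_step (i : gts_I T) G H M gv ge hv he t :
    dder (gts_rule T i) G H gv ge hv he -> derivs T H M t ->
    derivs T G M (fun x => obind t (step_track (gts_rule T i) G gv x)).

Definition joinable (T : gts) (H1 H2 : graph) : Prop :=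
  exists M t1 t2, derivs T H1 M t1 /\ derivs T H2 M t2.

(* A set D of isomorphism classes is given by a predicate on graphs:
   [G] \in D  iff  G is isomorphic to some member of D. *)
Definition inD (D : graph -> Prop) (G : graph) : Prop :=
  exists2 G', D G' & iso G' G.

Inductive sclosure (D : graph -> Prop) : graph -> Prop :=
| scl_base G : inD D G -> sclosure D G
| scl_sub G H : sclosure D G -> subgraph H G -> sclosure D H
| scl_iso G H : sclosure D G -> iso G H -> sclosure D H.

Definition locally_confluent_on (T : gts) (D : graph -> Prop) : Prop :=
  forall G H1 H2, inD D G -> dstep T G H1 -> dstep T G H2 -> joinable T H1 H2.

Definition imV (L : graph) (gv : nat -> nat) (x : nat) : bool :=
  has (fun v => gv v == x) (gV L).
Definition imE (L : graph) (ge : nat -> nat) (x : nat) : bool :=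
  has (fun e => ge e == x) (gE L).

Definition par_indep (r1 r2 : rule) (g1v g1e g2v g2e : nat -> nat) : Prop :=
  (forall x, imV (rL r1) g1v x -> imV (rL r2) g2v x ->
     imV (rK r1) g1v x && imV (rK r2) g2v x) /\
  (forall x, imE (rL r1) g1e x -> imE (rL r2) g2e x ->
     imE (rK r1) g1e x && imE (rK r2) g2e x).

Definition critical_pair (T : gts) (i1 i2 : gts_I T) (G H1 H2 : graph)
    (g1v g1e h1v h1e g2v g2e h2v h2e : nat -> nat) : Prop :=
  [/\ dder (gts_rule T i1) G H1 g1v g1e h1v h1e,
      dder (gts_rule T i2) G H2 g2v g2e h2v h2e,
      (forall x, x \in gV G -> imV (rL (gts_rule T i1)) g1v x || imV (rL (gts_rule T i2)) g2v x) /\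
      (forall x, x \in gE G -> imE (rL (gts_rule T i1)) g1e x || imE (rL (gts_rule T i2)) g2e x),
      ~ par_indep (gts_rule T i1) (gts_rule T i2) g1v g1e g2v g2e &
      (i1 = i2 -> ~ ({in gV (rL (gts_rule T i1)), g1v =1 g2v} /\
                      {in gE (rL (gts_rule T i1)), g1e =1 g2e}))].

Definition persistent (T : gts) (i1 i2 : gts_I T) (G : graph) (g1v g2v : nat -> nat)
    (v : nat) : bool :=
  (v \in gV G) && inDV (gts_rule T i1) G g1v v && inDV (gts_rule T i2) G g2v v.

Definition strongly_joinable (T : gts) (i1 i2 : gts_I T) (G H1 H2 : graph)
    (g1v g2v : nat -> nat) : Prop :=
  exists M t1 t2, [/\ derivs T H1 M t1, derivs T H2 M t2 &
    forall v, persistent i1 i2 G g1v g2v v ->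
      let tr1 := obind t1 (step_track (gts_rule T i1) G g1v v) in
      let tr2 := obind t2 (step_track (gts_rule T i2) G g2v v) in
      tr1 <> None /\ tr1 = tr2].

End GT.

(* Main.v *)
Require Import Defs.
From mathcomp Require Import all_boot.
From Stdlib Require Import Classical.
Set Implicit Arguments. Unset Strict Implicit. Unset Printing Implicit Defensive.

Section Basics.
Variables (LV LE : finType).
Implicit Types (G H X Y : graph LV LE) (r : rule LV LE).

Lemma KL_V r v : v \in gV (rK r) -> v \in gV (rL r) /\ lab (rL r) v = lab (rK r) v.
Proof. by case: (rule_KL r) => hv _ /hv. Qed.
Lemma KR_V r v : v \in gV (rK r) -> v \in gV (rR r) /\ lab (rR r) v = lab (rK r) v.
Proof. by case: (rule_KR r) => hv _ /hv. Qed.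
Lemma KL_E r e : e \in gE (rK r) -> [/\ e \in gE (rL r), src (rL r) e = src (rK r) e,
   tgt (rL r) e = tgt (rK r) e & mlab (rL r) e = mlab (rK r) e].
Proof. by case: (rule_KL r) => _ he /he. Qed.
Lemma KR_E r e : e \in gE (rK r) -> [/\ e \in gE (rR r), src (rR r) e = src (rK r) e,
   tgt (rR r) e = tgt (rK r) e & mlab (rR r) e = mlab (rK r) e].
Proof. by case: (rule_KR r) => _ he /he. Qed.

Lemma wf_src G e : e \in gE G -> src G e \in gV G.
Proof. by move/graph_wf/andP=> []. Qed.
Lemma wf_tgt G e : e \in gE G -> tgt G e \in gV G.
Proof. by move/graph_wf/andP=> []. Qed.

Lemma delVP r gv x : reflect (exists2 v, v \in gV (rL r) & (v \notin gV (rK r)) /\ gv v = x) (delV r gv x).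
Proof.
apply: (iffP hasP) => [[v Hv /andP[H1 /eqP H2]]|[v Hv [H1 H2]]]; exists v => //.
by rewrite H1 H2 eqxx.
Qed.
Lemma delEP r ge x : reflect (exists2 e, e \in gE (rL r) & (e \notin gE (rK r)) /\ ge e = x) (delE r ge x).
Proof.
apply: (iffP hasP) => [[v Hv /andP[H1 /eqP H2]]|[v Hv [H1 H2]]]; exists v => //.
by rewrite H1 H2 eqxx.
Qed.

Lemma imVP (L : graph LV LE) f x : reflect (exists2 v, v \in gV L & f v = x) (imV L f x).
Proof. by apply: (iffP hasP) => [[v Hv /eqP]|[v Hv <-]]; exists v. Qed.
Lemma imEP (L : graph LV LE) f x : reflect (exists2 v, v \in gE L & f v = x) (imE L f x).
Proof. by apply: (iffP hasP) => [[v Hv /eqP]|[v Hv <-]]; exists v. Qed.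

Lemma imV_in (L : graph LV LE) f v : v \in gV L -> imV L f (f v).
Proof. by move=> Hv; apply/imVP; exists v. Qed.
Lemma imE_in (L : graph LV LE) f v : v \in gE L -> imE L f (f v).
Proof. by move=> Hv; apply/imEP; exists v. Qed.

Section Match.
Variables (r : rule LV LE) (G : graph LV LE) (gv ge : nat -> nat).
Hypothesis Hg : inj_morph (rL r) G gv ge.

Lemma m_V v : v \in gV (rL r) -> gv v \in gV G /\ lab G (gv v) = lab (rL r) v.
Proof. by case: Hg => [[H _] _ _] /H. Qed.
Lemma m_E e : e \in gE (rL r) -> [/\ ge e \in gE G, src G (ge e) = gv (src (rL r) e),
                              tgt G (ge e) = gv (tgt (rL r) e) & mlab G (ge e) = mlab (rL r) e].
Proof. by case: Hg => [[_ H] _ _] /H. Qed.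
Lemma m_injV : {in gV (rL r) &, injective gv}.
Proof. by case: Hg. Qed.
Lemma m_injE : {in gE (rL r) &, injective ge}.
Proof. by case: Hg. Qed.

Lemma K_notdelV v : v \in gV (rK r) -> ~~ delV r gv (gv v).
Proof.
move=> vK; apply/delVP=> [[w wL [wK e]]].
have vL := (KL_V vK).1.
by move: wK; rewrite (m_injV wL vL e) vK.
Qed.
Lemma K_inDV v : v \in gV (rK r) -> inDV r G gv (gv v).
Proof.
move=> vK; rewrite /inDV K_notdelV // andbT.
exact: (m_V (KL_V vK).1).1.
Qed.
Lemma K_notdelE e : e \in gE (rK r) -> ~~ delE r ge (ge e).
Proof.
move=> vK; apply/delEP=> [[w wL [wK e']]].
have [vL _ _ _] := KL_E vK.
by move: wK; rewrite (m_injE wL vL e') vK.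
Qed.
Lemma K_inDE e : e \in gE (rK r) -> inDE r G ge (ge e).
Proof.
move=> vK; rewrite /inDE K_notdelE // andbT.
have [vL _ _ _] := KL_E vK.
by have [] := m_E vL.
Qed.
Lemma LK_delV v : v \in gV (rL r) -> v \notin gV (rK r) -> delV r gv (gv v).
Proof. by move=> vL vK; apply/delVP; exists v. Qed.
Lemma LK_delE v : v \in gE (rL r) -> v \notin gE (rK r) -> delE r ge (ge v).
Proof. by move=> vL vK; apply/delEP; exists v. Qed.

Definition dangling :=
  forall e, e \in gE G -> ~~ has (fun e' => ge e' == e) (gE (rL r)) ->
         forall v, v \in gV (rL r) -> v \notin gV (rK r) ->
           src G e <> gv v /\ tgt G e <> gv v.

Hypothesis Hd : dangling.

Lemma D_srctgt e : inDE r G ge e -> inDV r G gv (src G e) && inDV r G gv (tgt G e).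
Proof.
case/andP=> eG ndel.
rewrite /inDV (wf_src eG) (wf_tgt eG) /=.
case: (boolP (has (fun e' => ge e' == e) (gE (rL r)))) => [/hasP[e' e'L /eqP ee']|nim].
  have e'K : e' \in gE (rK r).
    by apply: contraNT ndel => e'K; apply/delEP; exists e'.
  have [e'L' s1 t1 _] := KL_E e'K.
  have [_ s2 t2 _] := m_E e'L.
  rewrite -ee' s2 t2 s1 t1.
  have [e'R _ _ _] := KL_E e'K.
  by rewrite !K_notdelV // ?(graph_wf _) ?(wf_src e'K) ?(wf_tgt e'K).
apply/andP; split; apply/delVP=> [[v vL [vK ev]]]; have [] := Hd eG nim vL vK; by rewrite ev.
Qed.
End Match.

End Basics.

Section DFacts.
Variables (LV LE : finType).
Implicit Types (G H X Y : graph LV LE) (r : rule LV LE).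

Definition newV r (hv : nat -> nat) x := has (fun v => (v \notin gV (rK r)) && (hv v == x)) (gV (rR r)).
Definition newE r (he : nat -> nat) x := has (fun v => (v \notin gE (rK r)) && (he v == x)) (gE (rR r)).
Definition invV r (hv : nat -> nat) x :=
  nth 0 (gV (rR r)) (find (fun v => (v \notin gV (rK r)) && (hv v == x)) (gV (rR r))).
Definition invE r (he : nat -> nat) x :=
  nth 0 (gE (rR r)) (find (fun v => (v \notin gE (rK r)) && (he v == x)) (gE (rR r))).

Lemma newVP r hv x : reflect (exists2 v, v \in gV (rR r) & (v \notin gV (rK r)) /\ hv v = x) (newV r hv x).
Proof.
apply: (iffP hasP) => [[v Hv /andP[H1 /eqP H2]]|[v Hv [H1 H2]]]; exists v => //.
by rewrite H1 H2 eqxx.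
Qed.
Lemma newEP r he x : reflect (exists2 v, v \in gE (rR r) & (v \notin gE (rK r)) /\ he v = x) (newE r he x).
Proof.
apply: (iffP hasP) => [[v Hv /andP[H1 /eqP H2]]|[v Hv [H1 H2]]]; exists v => //.
by rewrite H1 H2 eqxx.
Qed.

Lemma invV_spec r hv x : newV r hv x ->
  [/\ invV r hv x \in gV (rR r), invV r hv x \notin gV (rK r) & hv (invV r hv x) = x].
Proof.
move=> Hn; have := nth_find 0 Hn; rewrite -/(invV r hv x) => /andP[H1 /eqP H2].
by split=> //; apply: mem_nth; rewrite -has_find.
Qed.
Lemma invE_spec r he x : newE r he x ->
  [/\ invE r he x \in gE (rR r), invE r he x \notin gE (rK r) & he (invE r he x) = x].
Proof.
move=> Hn; have := nth_find 0 Hn; rewrite -/(invE r he x) => /andP[H1 /eqP H2].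
by split=> //; apply: mem_nth; rewrite -has_find.
Qed.

Lemma invV_hv r hv v : {in gV (rR r) &, injective hv} -> v \in gV (rR r) -> v \notin gV (rK r) ->
  invV r hv (hv v) = v.
Proof.
move=> inj vR vK.
have Hn : newV r hv (hv v) by apply/newVP; exists v.
have [i1 i2 i3] := invV_spec Hn.
exact: inj.
Qed.
Lemma invE_he r he v : {in gE (rR r) &, injective he} -> v \in gE (rR r) -> v \notin gE (rK r) ->
  invE r he (he v) = v.
Proof.
move=> inj vR vK.
have Hn : newE r he (he v) by apply/newEP; exists v.
have [i1 i2 i3] := invE_spec Hn.
exact: inj.
Qed.

Section Dder.
Variables (r : rule LV LE) (G H : graph LV LE) (gv ge hv he : nat -> nat).
Hypothesis Hd : dder r G H gv ge hv he.

Lemma dd_m : inj_morph (rL r) G gv ge. Proof. by case: Hd. Qed.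
Lemma dd_dang : dangling r G gv ge. Proof. by case: Hd. Qed.
Lemma dd_DV x : inDV r G gv x -> x \in gV H /\ lab H x = lab G x.
Proof. by case: Hd => _ _ [H1 _] _ _; apply: H1. Qed.
Lemma dd_DE e : inDE r G ge e -> [/\ e \in gE H, src H e = src G e, tgt H e = tgt G e & mlab H e = mlab G e].
Proof. by case: Hd => _ _ [_ H1] _ _; apply: H1. Qed.
Lemma dd_co : inj_morph (rR r) H hv he. Proof. by case: Hd => _ _ _ []. Qed.
Lemma dd_KV v : v \in gV (rK r) -> hv v = gv v. Proof. by case: Hd => _ _ _ [_ [H1 _]] _; apply: H1. Qed.
Lemma dd_KE v : v \in gE (rK r) -> he v = ge v. Proof. by case: Hd => _ _ _ [_ [_ H1]] _; apply: H1. Qed.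
Lemma dd_coV v : v \in gV (rR r) -> hv v \in gV H /\ lab H (hv v) = lab (rR r) v.
Proof. by case: dd_co => [[H1 _] _ _] /H1. Qed.
Lemma dd_coE e : e \in gE (rR r) -> [/\ he e \in gE H, src H (he e) = hv (src (rR r) e),
                              tgt H (he e) = hv (tgt (rR r) e) & mlab H (he e) = mlab (rR r) e].
Proof. by case: dd_co => [[_ H1] _ _] /H1. Qed.
Lemma dd_injV : {in gV (rR r) &, injective hv}. Proof. by case: dd_co. Qed.
Lemma dd_injE : {in gE (rR r) &, injective he}. Proof. by case: dd_co. Qed.

Lemma dd_newV_notD x : newV r hv x -> ~~ inDV r G gv x.
Proof. by case: Hd => _ _ _ _ [H1 _ _ _] /newVP [v vR [vK <-]]; apply: H1. Qed.
Lemma dd_newE_notD x : newE r he x -> ~~ inDE r G ge x.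
Proof. by case: Hd => _ _ _ _ [_ H1 _ _] /newEP [v vR [vK <-]]; apply: H1. Qed.
Lemma dd_covV x : x \in gV H -> inDV r G gv x || newV r hv x.
Proof.
case: Hd => _ _ _ _ [_ _ H1 _] /H1 [->//|[v vR /andP[vK /eqP <-]]].
by apply/orP; right; apply/newVP; exists v.
Qed.
Lemma dd_covE x : x \in gE H -> inDE r G ge x || newE r he x.
Proof.
case: Hd => _ _ _ _ [_ _ _ H1] /H1 [->//|[v vR /andP[vK /eqP <-]]].
by apply/orP; right; apply/newEP; exists v.
Qed.
Lemma dd_newV_in x : newV r hv x -> x \in gV H.
Proof. by case/newVP=> v vR [_ <-]; exact: (dd_coV vR).1. Qed.
Lemma dd_newE_in x : newE r he x -> x \in gE H.
Proof. by case/newEP=> v vR [_ <-]; have [] := dd_coE vR. Qed.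
Lemma dd_newV_hv v : v \in gV (rR r) -> v \notin gV (rK r) -> newV r hv (hv v).
Proof. by move=> vR vK; apply/newVP; exists v. Qed.
Lemma dd_newE_he v : v \in gE (rR r) -> v \notin gE (rK r) -> newE r he (he v).
Proof. by move=> vR vK; apply/newEP; exists v. Qed.
Lemma dd_K_notnewV v : v \in gV (rK r) -> ~~ newV r hv (hv v).
Proof.
move=> vK; rewrite (dd_KV vK); apply: contraL (K_inDV dd_m vK) => Hn.
by rewrite -(dd_KV vK) in Hn *; apply: dd_newV_notD.
Qed.
Lemma dd_K_notnewE v : v \in gE (rK r) -> ~~ newE r he (he v).
Proof.
move=> vK; rewrite (dd_KE vK); apply: contraL (K_inDE dd_m vK) => Hn.
by rewrite -(dd_KE vK) in Hn *; apply: dd_newE_notD.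
Qed.
Lemma dd_D_srctgt e : inDE r G ge e -> inDV r G gv (src G e) && inDV r G gv (tgt G e).
Proof. move=> He; exact: (D_srctgt dd_m dd_dang He). Qed.
Lemma dd_newE_src e : newE r he e ->
  src H e = hv (src (rR r) (invE r he e)) /\ tgt H e = hv (tgt (rR r) (invE r he e)).
Proof. by move=> /invE_spec[i1 i2 i3]; have [_ s t _] := dd_coE i1; rewrite -{1 3}i3. Qed.
End Dder.

Lemma leq_sumn (s : seq nat) x : x \in s -> x <= sumn s.
Proof.
elim: s => //= y s IH; rewrite in_cons => /orP[/eqP->|/IH]; first exact: leq_addr.
by move=> h; apply: leq_trans h (leq_addl _ _).
Qed.

End DFacts.

Section Apply.
Variables (LV LE : finType).
Variables (r : rule LV LE) (G : graph LV LE) (gv ge : nat -> nat).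
Hypothesis Hg : inj_morph (rL r) G gv ge.
Hypothesis Hdang : dangling r G gv ge.

Let N := (sumn (gV G)).+1.
Let M := (sumn (gE G)).+1.
Let hv0 v := if v \in gV (rK r) then gv v else N + v.
Let he0 e := if e \in gE (rK r) then ge e else M + e.
Let V0 := [seq x <- gV G | ~~ delV r gv x] ++ [seq N + v | v <- [seq v <- gV (rR r) | v \notin gV (rK r)]].
Let E0 := [seq x <- gE G | ~~ delE r ge x] ++ [seq M + v | v <- [seq v <- gE (rR r) | v \notin gE (rK r)]].
Let src0 e := if M <= e then hv0 (src (rR r) (e - M)) else src G e.
Let tgt0 e := if M <= e then hv0 (tgt (rR r) (e - M)) else tgt G e.
Let lab0 x := if N <= x then lab (rR r) (x - N) else lab G x.
Let mlab0 x := if M <= x then mlab (rR r) (x - M) else mlab G x.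

Lemma GN x : x \in gV G -> x < N.
Proof. by move=> h; rewrite ltnS leq_sumn. Qed.
Lemma GM x : x \in gE G -> x < M.
Proof. by move=> h; rewrite ltnS leq_sumn. Qed.

Lemma memV0 x : (x \in V0) = inDV r G gv x || has (fun v => (v \notin gV (rK r)) && (N + v == x)) (gV (rR r)).
Proof.
rewrite mem_cat mem_filter andbC; congr (_ || _).
apply/mapP/hasP => [[v]|[v vR /andP[vK /eqP <-]]].
  by rewrite mem_filter => /andP[vK vR] ->; exists v => //; rewrite vK eqxx.
by exists v => //; rewrite mem_filter vK.
Qed.
Lemma memE0 x : (x \in E0) = inDE r G ge x || has (fun v => (v \notin gE (rK r)) && (M + v == x)) (gE (rR r)).
Proof.
rewrite mem_cat mem_filter andbC; congr (_ || _).
apply/mapP/hasP => [[v]|[v vR /andP[vK /eqP <-]]].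
  by rewrite mem_filter => /andP[vK vR] ->; exists v => //; rewrite vK eqxx.
by exists v => //; rewrite mem_filter vK.
Qed.

Lemma hv0_in v : v \in gV (rR r) -> hv0 v \in V0.
Proof.
move=> vR; rewrite /hv0 memV0; case: ifP => vK.
  by rewrite (K_inDV Hg vK).
by apply/orP; right; apply/hasP; exists v; rewrite // vK eqxx.
Qed.

Lemma wf0 e : e \in E0 -> (src0 e \in V0) && (tgt0 e \in V0).
Proof.
rewrite memE0 => /orP[De|/hasP[v vR /andP[vK /eqP <-]]].
  have eG : e \in gE G by case/andP: De.
  rewrite /src0 /tgt0 leqNgt (GM eG) /= !memV0.
  by case/andP: (D_srctgt Hg Hdang De) => -> ->.
by rewrite /src0 /tgt0 leq_addr addKn !hv0_in // ?wf_src ?wf_tgt.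
Qed.

Definition H0 := @Graph LV LE V0 E0 src0 tgt0 lab0 mlab0 wf0.

Lemma apply_dder : dder r G H0 gv ge hv0 he0.
Proof.
have Kn v : v \in gV (rK r) -> hv0 v = gv v by rewrite /hv0 => ->.
have Ke v : v \in gE (rK r) -> he0 v = ge v by rewrite /he0 => ->.
have nK v : v \notin gV (rK r) -> hv0 v = N + v by rewrite /hv0 => /negbTE->.
have eK v : v \notin gE (rK r) -> he0 v = M + v by rewrite /he0 => /negbTE->.
have DG x : inDV r G gv x -> x \in gV G by case/andP.
have DEG x : inDE r G ge x -> x \in gE G by case/andP.
split=> //.
- split=> x Dx /=.
    by rewrite memV0 Dx /lab0 leqNgt (GN (DG _ Dx)).
  have nM : (M <= x) = false by rewrite leqNgt GM // DEG.
  by rewrite memE0 Dx /src0 /tgt0 /mlab0 nM.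
- split; last by split.
  split; first split.
  + move=> v vR /=; split; first exact: hv0_in.
    rewrite /lab0; case: (boolP (v \in gV (rK r))) => vK.
      have nN : (N <= gv v) = false by rewrite leqNgt GN //; exact: (m_V Hg (KL_V vK).1).1.
      rewrite Kn // nN.
      rewrite (m_V Hg (KL_V vK).1).2 (KL_V vK).2 (KR_V vK).2 //.
    by rewrite nK // leq_addr addKn.
  + move=> e eR /=; case: (boolP (e \in gE (rK r))) => eK'.
      have [eL s1 t1 l1] := KL_E eK'; have [_ s2 t2 l2] := KR_E eK'.
      have [ge1 s3 t3 l3] := m_E Hg eL.
      have nM : (M <= ge e) = false by rewrite leqNgt GM.
      rewrite Ke // /src0 /tgt0 /mlab0 nM s3 t3 l3 s1 t1 s2 t2 l1 l2.
      rewrite !Kn ?wf_src ?wf_tgt //; split=> //.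
      by rewrite memE0 (K_inDE Hg).
    rewrite eK // /src0 /tgt0 /mlab0 leq_addr addKn; split=> //.
    by rewrite memE0; apply/orP; right; apply/hasP; exists e; rewrite // eK' eqxx.
  + move=> v w vR wR; case: (boolP (v \in gV (rK r))) => vK; case: (boolP (w \in gV (rK r))) => wK.
    * rewrite !Kn //; apply: (m_injV Hg); [exact: (KL_V vK).1 | exact: (KL_V wK).1].
    * rewrite (Kn v) // (nK w) // => E; have := GN (m_V Hg (KL_V vK).1).1.
      by rewrite E ltnNge leq_addr.
    * rewrite (Kn w) // (nK v) // => E; have := GN (m_V Hg (KL_V wK).1).1.
      by rewrite -E ltnNge leq_addr.
    * by rewrite !nK //; move/addnI.
  + move=> v w vR wR; case: (boolP (v \in gE (rK r))) => vK; case: (boolP (w \in gE (rK r))) => wK.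
    * rewrite !Ke //; apply: (m_injE Hg); [by case: (KL_E vK) | by case: (KL_E wK)].
    * rewrite (Ke v) // (eK w) // => E; have [vL _ _ _] := KL_E vK; have [ge1 _ _ _] := m_E Hg vL.
      by have := GM ge1; rewrite E ltnNge leq_addr.
    * rewrite (Ke w) // (eK v) // => E; have [vL _ _ _] := KL_E wK; have [ge1 _ _ _] := m_E Hg vL.
      by have := GM ge1; rewrite -E ltnNge leq_addr.
    * by rewrite !eK //; move/addnI.
- split.
  + move=> v vR vK; rewrite nK //; apply/negP=> /DG /GN.
    by rewrite ltnNge leq_addr.
  + move=> v vR vK; rewrite eK //; apply/negP=> /DEG /GM.
    by rewrite ltnNge leq_addr.
  + move=> x /=; rewrite memV0 => /orP[->|/hasP[v vR /andP[vK /eqP <-]]]; first by left.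
    by right; exists v; rewrite // nK // vK eqxx.
  + move=> x /=; rewrite memE0 => /orP[->|/hasP[v vR /andP[vK /eqP <-]]]; first by left.
    by right; exists v; rewrite // eK // vK eqxx.
Qed.

End Apply.

Lemma apply_ex (LV LE : finType) (r : rule LV LE) G gv ge :
  inj_morph (rL r) G gv ge -> dangling r G gv ge ->
  exists H hv he, dder r G H gv ge hv he.
Proof. move=> Hg Hd; do 3 eexists; exact: (apply_dder Hg Hd). Qed.

Section IM.
Variables (LV LE : finType) (A B : graph LV LE) (fV fE : nat -> nat).
Hypothesis Hf : inj_morph A B fV fE.
Lemma imo_V v : v \in gV A -> fV v \in gV B /\ lab B (fV v) = lab A v.
Proof. by case: Hf => [[H _] _ _] /H. Qed.
Lemma imo_E e : e \in gE A -> [/\ fE e \in gE B, src B (fE e) = fV (src A e),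
                              tgt B (fE e) = fV (tgt A e) & mlab B (fE e) = mlab A e].
Proof. by case: Hf => [[_ H] _ _] /H. Qed.
Lemma imo_injV : {in gV A &, injective fV}. Proof. by case: Hf. Qed.
Lemma imo_injE : {in gE A &, injective fE}. Proof. by case: Hf. Qed.
End IM.

Section Compare.
Variables (LV LE : finType) (r : rule LV LE) (X X1 Y Y1 : graph LV LE).
Variables (gv ge hv he gv' ge' hv' he' fV fE : nat -> nat).
Hypothesis HX : dder r X X1 gv ge hv he.
Hypothesis HY : dder r Y Y1 gv' ge' hv' he'.
Hypothesis Hf : inj_morph X Y fV fE.
Hypothesis HgV : {in gV (rL r), forall v, gv' v = fV (gv v)}.
Hypothesis HgE : {in gE (rL r), forall v, ge' v = fE (ge v)}.

Definition f1V x := if newV r hv x then hv' (invV r hv x) else fV x.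
Definition f1E x := if newE r he x then he' (invE r he x) else fE x.

Lemma c_DV x : inDV r X gv x -> inDV r Y gv' (fV x) /\ f1V x = fV x.
Proof.
move=> Dx; split; last first.
  by rewrite /f1V; case: ifP => // /(dd_newV_notD HX); rewrite Dx.
have xX : x \in gV X by case/andP: Dx.
rewrite /inDV (imo_V Hf xX).1 /=; apply/delVP => [[v vL [vK E]]].
have gvX := (m_V (dd_m HX) vL).1.
rewrite HgV // in E; have E' := imo_injV Hf gvX xX E.
by case/andP: Dx => _ /delVP; apply; exists v; last split.
Qed.
Lemma c_DE x : inDE r X ge x -> inDE r Y ge' (fE x) /\ f1E x = fE x.
Proof.
move=> Dx; split; last first.
  by rewrite /f1E; case: ifP => // /(dd_newE_notD HX); rewrite Dx.
have xX : x \in gE X by case/andP: Dx.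
have [fx _ _ _] := imo_E Hf xX.
rewrite /inDE fx /=; apply/delEP => [[v vL [vK E]]].
have [gvX _ _ _] := m_E (dd_m HX) vL.
rewrite HgE // in E; have E' := imo_injE Hf gvX xX E.
by case/andP: Dx => _ /delEP; apply; exists v; last split.
Qed.

Lemma c_hv s : s \in gV (rR r) -> f1V (hv s) = hv' s.
Proof.
move=> sR; case: (boolP (s \in gV (rK r))) => sK.
  rewrite /f1V (negbTE (dd_K_notnewV HX sK)) (dd_KV HX sK) (dd_KV HY sK) HgV //.
  exact: (KL_V sK).1.
rewrite /f1V (dd_newV_hv hv sR sK) invV_hv //; exact: dd_injV HX.
Qed.
Lemma c_he s : s \in gE (rR r) -> f1E (he s) = he' s.
Proof.
move=> sR; case: (boolP (s \in gE (rK r))) => sK.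
  rewrite /f1E (negbTE (dd_K_notnewE HX sK)) (dd_KE HX sK) (dd_KE HY sK) HgE //.
  by case: (KL_E sK).
rewrite /f1E (dd_newE_he he sR sK) invE_he //; exact: dd_injE HX.
Qed.

Lemma c_newV_notD x : newV r hv x -> ~~ inDV r Y gv' (f1V x).
Proof.
move=> /invV_spec[i1 i2 i3]; rewrite -i3 c_hv //.
exact: (dd_newV_notD HY (dd_newV_hv hv' i1 i2)).
Qed.
Lemma c_newE_notD x : newE r he x -> ~~ inDE r Y ge' (f1E x).
Proof.
move=> /invE_spec[i1 i2 i3]; rewrite -i3 c_he //.
exact: (dd_newE_notD HY (dd_newE_he he' i1 i2)).
Qed.

Lemma c_morph : inj_morph X1 Y1 f1V f1E.
Proof.
split; first split.
- move=> x /(dd_covV HX)/orP[Dx|/invV_spec[i1 i2 i3]].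
    have [DY ->] := c_DV Dx; have [-> ->] := dd_DV HY DY.
    by rewrite (imo_V Hf (_ : x \in gV X)).2 ?(dd_DV HX Dx).2 //; case/andP: Dx.
  by rewrite -i3 c_hv // (dd_coV HY i1).1 (dd_coV HY i1).2 (dd_coV HX i1).2.
- move=> x /(dd_covE HX)/orP[Dx|/invE_spec[i1 i2 i3]].
    have [DY ->] := c_DE Dx; have [-> -> -> ->] := dd_DE HY DY.
    have xX : x \in gE X by case/andP: Dx.
    have [_ -> -> ->] := imo_E Hf xX; have [_ -> -> ->] := dd_DE HX Dx.
    by case/andP: (dd_D_srctgt HX Dx) => /c_DV[_ ->] /c_DV[_ ->].
  rewrite -i3 c_he //; have [-> -> -> ->] := dd_coE HY i1; have [_ -> -> ->] := dd_coE HX i1.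
  by rewrite !c_hv ?wf_src ?wf_tgt.
- move=> x y /(dd_covV HX)/orP[Dx|Nx] /(dd_covV HX)/orP[Dy|Ny].
  + rewrite (c_DV Dx).2 (c_DV Dy).2; apply: (imo_injV Hf); [by case/andP: Dx|by case/andP: Dy].
  + move=> E; have := c_newV_notD Ny; rewrite -E (c_DV Dx).2.
    by rewrite (c_DV Dx).1.
  + move=> E; have := c_newV_notD Nx; rewrite E (c_DV Dy).2.
    by rewrite (c_DV Dy).1.
  + case/invV_spec: Nx => i1 i2 i3; case/invV_spec: Ny => j1 j2 j3.
    rewrite -i3 -j3 !c_hv // => E; by rewrite (dd_injV HY i1 j1 E).
- move=> x y /(dd_covE HX)/orP[Dx|Nx] /(dd_covE HX)/orP[Dy|Ny].
  + rewrite (c_DE Dx).2 (c_DE Dy).2; apply: (imo_injE Hf); [by case/andP: Dx|by case/andP: Dy].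
  + move=> E; have := c_newE_notD Ny; rewrite -E (c_DE Dx).2.
    by rewrite (c_DE Dx).1.
  + move=> E; have := c_newE_notD Nx; rewrite E (c_DE Dy).2.
    by rewrite (c_DE Dy).1.
  + case/invE_spec: Nx => i1 i2 i3; case/invE_spec: Ny => j1 j2 j3.
    rewrite -i3 -j3 !c_he // => E; by rewrite (dd_injE HY i1 j1 E).
Qed.

Lemma c_covV y : y \in gV Y1 -> imV X1 f1V y || (y \in gV Y) && ~~ imV X fV y.
Proof.
move=> /(dd_covV HY)/orP[Dy|/invV_spec[i1 i2 i3]]; last first.
  apply/orP; left; apply/imVP; exists (hv (invV r hv' y)); last by rewrite c_hv.
  exact: (dd_newV_in HX (dd_newV_hv hv i1 i2)).
have yY : y \in gV Y by case/andP: Dy.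
rewrite yY /=; case: (boolP (imV X fV y)) => [/imVP[x xX E]|]; last by rewrite orbT.
case: (boolP (inDV r X gv x)) => Dx.
  apply/orP; left; apply/imVP; exists x; first exact: (dd_DV HX Dx).1.
  by rewrite (c_DV Dx).2.
have : delV r gv x by move: Dx; rewrite /inDV xX /= negbK.
case/delVP=> v vL [vK E2]; case/andP: Dy => _ /delVP[]; exists v => //; split=> //.
by rewrite HgV // E2.
Qed.

Lemma c_covE y : y \in gE Y1 -> imE X1 f1E y || (y \in gE Y) && ~~ imE X fE y.
Proof.
move=> /(dd_covE HY)/orP[Dy|/invE_spec[i1 i2 i3]]; last first.
  apply/orP; left; apply/imEP; exists (he (invE r he' y)); last by rewrite c_he.
  exact: (dd_newE_in HX (dd_newE_he he i1 i2)).
have yY : y \in gE Y by case/andP: Dy.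
rewrite yY /=; case: (boolP (imE X fE y)) => [/imEP[x xX E]|]; last by rewrite orbT.
case: (boolP (inDE r X ge x)) => Dx.
  apply/orP; left; apply/imEP; exists x; first by case: (dd_DE HX Dx).
  by rewrite (c_DE Dx).2.
have : delE r ge x by move: Dx; rewrite /inDE xX /= negbK.
case/delEP=> v vL [vK E2]; case/andP: Dy => _ /delEP[]; exists v => //; split=> //.
by rewrite HgE // E2.
Qed.

Lemma c_ctxV y : y \in gV Y -> ~~ imV X fV y ->
  [/\ inDV r Y gv' y, y \in gV Y1, lab Y1 y = lab Y y & ~~ imV X1 f1V y].
Proof.
move=> yY nim.
have Dy : inDV r Y gv' y.
  rewrite /inDV yY /=; apply/delVP=> [[v vL [vK E]]]; case/imVP: nim.
  exists (gv v); first exact: (m_V (dd_m HX) vL).1.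
  by rewrite -HgV.
have [i1 i2] := dd_DV HY Dy; split=> //.
apply/imVP=> [[x xX1 E]]; move: (dd_covV HX xX1) => /orP[Dx|Nx].
  case/imVP: nim; exists x; first by case/andP: Dx.
  by rewrite -(c_DV Dx).2.
by have := c_newV_notD Nx; rewrite E Dy.
Qed.

Lemma c_ctxE y : y \in gE Y -> ~~ imE X fE y ->
  [/\ inDE r Y ge' y, y \in gE Y1, src Y1 y = src Y y /\ tgt Y1 y = tgt Y y,
      mlab Y1 y = mlab Y y & ~~ imE X1 f1E y].
Proof.
move=> yY nim.
have Dy : inDE r Y ge' y.
  rewrite /inDE yY /=; apply/delEP=> [[v vL [vK E]]]; case/imEP: nim.
  exists (ge v); first by case: (m_E (dd_m HX) vL).
  by rewrite -HgE.
have [i1 i2 i3 i4] := dd_DE HY Dy; split=> //.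
apply/imEP=> [[x xX1 E]]; move: (dd_covE HX xX1) => /orP[Dx|Nx].
  case/imEP: nim; exists x; first by case/andP: Dx.
  by rewrite -(c_DE Dx).2.
by have := c_newE_notD Nx; rewrite E Dy.
Qed.

End Compare.

Definition finv (s : seq nat) (f : nat -> nat) y := nth 0 s (find (fun x => f x == y) s).
Lemma finv_spec s f y : has (fun x => f x == y) s -> finv s f y \in s /\ f (finv s f y) = y.
Proof.
move=> Hh; have := nth_find 0 Hh; rewrite -/(finv s f y) => /eqP ->; split=> //.
by apply: mem_nth; rewrite -has_find.
Qed.
Lemma finv_f s f x : {in s &, injective f} -> x \in s -> finv s f (f x) = x.
Proof.
move=> inj xs; have Hh : has (fun z => f z == f x) s by apply/hasP; exists x.
by have [i1 i2] := finv_spec Hh; apply: inj.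
Qed.

Section Glue.
Variables (LV LE : finType).
Implicit Types (G H X Y M Z : graph LV LE).

Definition glep X (fV : nat -> nat) (t : nat -> option nat) (pV cV : nat -> nat) a b :=
  (~~ imV X fV a -> b = cV a) /\
  (forall x, x \in gV X -> fV x = a -> exists2 m, t x = Some m & b = pV m).

Record glue X Y M Z (fV fE : nat -> nat) (t : nat -> option nat) (pV pE cV cE : nat -> nat) : Prop := Glue {
 gl_p : inj_morph M Z pV pE;
 gl_cV : forall y, y \in gV Y -> ~~ imV X fV y ->
   [/\ cV y \in gV Z, lab Z (cV y) = lab Y y & ~~ imV M pV (cV y)];
 gl_cVinj : forall y1 y2, y1 \in gV Y -> ~~ imV X fV y1 -> y2 \in gV Y -> ~~ imV X fV y2 ->
   cV y1 = cV y2 -> y1 = y2;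
 gl_covV : forall z, z \in gV Z -> imV M pV z \/ exists2 y, (y \in gV Y) && ~~ imV X fV y & cV y = z;
 gl_cE : forall y, y \in gE Y -> ~~ imE X fE y ->
   [/\ cE y \in gE Z, mlab Z (cE y) = mlab Y y & ~~ imE M pE (cE y)];
 gl_cEinj : forall y1 y2, y1 \in gE Y -> ~~ imE X fE y1 -> y2 \in gE Y -> ~~ imE X fE y2 ->
   cE y1 = cE y2 -> y1 = y2;
 gl_covE : forall z, z \in gE Z -> imE M pE z \/ exists2 y, (y \in gE Y) && ~~ imE X fE y & cE y = z;
 gl_ep : forall y, y \in gE Y -> ~~ imE X fE y ->
   glep X fV t pV cV (src Y y) (src Z (cE y)) /\ glep X fV t pV cV (tgt Y y) (tgt Z (cE y))
}.

Lemma comp_inj_morph (A B C : graph LV LE) f g f' g' :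
  inj_morph A B f g -> inj_morph B C f' g' -> inj_morph A C (fun x => f' (f x)) (fun x => g' (g x)).
Proof.
move=> H1 H2; split; first split.
- move=> v vA; have [i1 i2] := imo_V H1 vA; have [j1 j2] := imo_V H2 i1.
  by rewrite j2 i2.
- move=> e eA; have [i1 i2 i3 i4] := imo_E H1 eA; have [j1 j2 j3 j4] := imo_E H2 i1.
  by rewrite j2 j3 j4 i2 i3 i4.
- move=> x y xA yA /(imo_injV H2 (imo_V H1 xA).1 (imo_V H1 yA).1).
  exact: (imo_injV H1 xA yA).
- move=> x y xA yA; have [i1 _ _ _] := imo_E H1 xA; have [j1 _ _ _] := imo_E H1 yA.
  move/(imo_injE H2 i1 j1); exact: (imo_injE H1 xA yA).
Qed.

Section IsoCase.
Variables (X Y M Z : graph LV LE) (a b fV fE pV pE cV cE : nat -> nat).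
Hypothesis Hiso : iso_by X M a b.
Hypothesis Hf : inj_morph X Y fV fE.
Hypothesis Hgl : glue X Y M Z fV fE (fun x => if x \in gV X then Some (a x) else None) pV pE cV cE.

Let FV y := if imV X fV y then pV (a (finv (gV X) fV y)) else cV y.
Let FE y := if imE X fE y then pE (b (finv (gE X) fE y)) else cE y.

Let Ha : inj_morph X M a b. Proof. by case: Hiso. Qed.
Let Hp : inj_morph M Z pV pE. Proof. by case: Hgl. Qed.

Lemma FV_im x : x \in gV X -> FV (fV x) = pV (a x).
Proof. by move=> xX; rewrite /FV imV_in // finv_f //; exact: imo_injV Hf. Qed.
Lemma FE_im x : x \in gE X -> FE (fE x) = pE (b x).
Proof. by move=> xX; rewrite /FE imE_in // finv_f //; exact: imo_injE Hf. Qed.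
Lemma FV_ctx y : ~~ imV X fV y -> FV y = cV y.
Proof. by rewrite /FV => /negbTE->. Qed.
Lemma FE_ctx y : ~~ imE X fE y -> FE y = cE y.
Proof. by rewrite /FE => /negbTE->. Qed.

Lemma glue_iso : iso_by Y Z FV FE.
Proof.
split; first split; first split.
- move=> y yY; case: (boolP (imV X fV y)) => [/imVP[x xX <-]|nim].
    rewrite FV_im //; have [i1 i2] := imo_V Ha xX; have [j1 j2] := imo_V Hp i1.
    by rewrite j1 j2 i2 (imo_V Hf xX).2.
  by rewrite FV_ctx //; have [-> -> _] := gl_cV Hgl yY nim.
- move=> y yY; case: (boolP (imE X fE y)) => [/imEP[x xX <-]|nim].
    rewrite FE_im //; have [i1 i2 i3 i4] := imo_E Ha xX; have [j1 j2 j3 j4] := imo_E Hp i1.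
    have [k1 k2 k3 k4] := imo_E Hf xX.
    by rewrite j2 j3 j4 i2 i3 i4 k2 k3 k4 !FV_im ?wf_src ?wf_tgt.
  rewrite FE_ctx //; have [-> -> _] := gl_cE Hgl yY nim.
  have [[e1 e2] [e3 e4]] := gl_ep Hgl yY nim.
  have H s : s \in gV Y -> glep X fV (fun x => if x \in gV X then Some (a x) else None) pV cV s
                 (src Z (cE y)) -> src Z (cE y) = FV s.
    move=> sY [h1 h2]; case: (boolP (imV X fV s)) => [/imVP[x xX E]|nim'].
      by have [m] := h2 x xX E; rewrite xX => -[<-] ->; rewrite -E FV_im.
    by rewrite FV_ctx // h1.
  have H' s : s \in gV Y -> glep X fV (fun x => if x \in gV X then Some (a x) else None) pV cV s
                 (tgt Z (cE y)) -> tgt Z (cE y) = FV s.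
    move=> sY [h1 h2]; case: (boolP (imV X fV s)) => [/imVP[x xX E]|nim'].
      by have [m] := h2 x xX E; rewrite xX => -[<-] ->; rewrite -E FV_im.
    by rewrite FV_ctx // h1.
  split=> //; [exact: (H _ (wf_src yY) (conj e1 e2)) | exact: (H' _ (wf_tgt yY) (conj e3 e4))].
- move=> y1 y2 y1Y y2Y.
  case: (boolP (imV X fV y1)) => [/imVP[x1 x1X <-]|n1];
  case: (boolP (imV X fV y2)) => [/imVP[x2 x2X <-]|n2].
  + rewrite !FV_im // => /(imo_injV Hp (imo_V Ha x1X).1 (imo_V Ha x2X).1).
    by move/(imo_injV Ha x1X x2X) ->.
  + rewrite FV_im // FV_ctx // => E; have [_ _] := gl_cV Hgl y2Y n2.
    by rewrite -E imV_in // (imo_V Ha x1X).1.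
  + rewrite FV_im // FV_ctx // => E; have [_ _] := gl_cV Hgl y1Y n1.
    by rewrite E imV_in // (imo_V Ha x2X).1.
  + by rewrite !FV_ctx //; apply: (gl_cVinj Hgl).
- move=> y1 y2 y1Y y2Y.
  case: (boolP (imE X fE y1)) => [/imEP[x1 x1X <-]|n1];
  case: (boolP (imE X fE y2)) => [/imEP[x2 x2X <-]|n2].
  + have [i1 _ _ _] := imo_E Ha x1X; have [j1 _ _ _] := imo_E Ha x2X.
    rewrite !FE_im // => /(imo_injE Hp i1 j1).
    by move/(imo_injE Ha x1X x2X) ->.
  + have [i1 _ _ _] := imo_E Ha x1X.
    rewrite FE_im // FE_ctx // => E; have [_ _] := gl_cE Hgl y2Y n2.
    by rewrite -E imE_in.
  + have [i1 _ _ _] := imo_E Ha x2X.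
    rewrite FE_im // FE_ctx // => E; have [_ _] := gl_cE Hgl y1Y n1.
    by rewrite E imE_in.
  + by rewrite !FE_ctx //; apply: (gl_cEinj Hgl).
- move=> z /(gl_covV Hgl) [/imVP[m mM <-]|[y /andP[yY nim] <-]].
    case: Hiso => _ /(_ m mM)[x xX <-] _.
    by exists (fV x); [exact: (imo_V Hf xX).1 | rewrite FV_im].
  by exists y; rewrite // FV_ctx.
- move=> z /(gl_covE Hgl) [/imEP[m mM <-]|[y /andP[yY nim] <-]].
    case: Hiso => _ _ /(_ m mM)[x xX <-].
    by exists (fE x); [by case: (imo_E Hf xX) | rewrite FE_im].
  by exists y; rewrite // FE_ctx.
Qed.
End IsoCase.

Lemma ext_derivs (T : gts LV LE) X M t : derivs T X M t ->
  forall Y Z fV fE pV pE cV cE, inj_morph X Y fV fE ->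
  glue X Y M Z fV fE t pV pE cV cE -> exists t', derivs T Y Z t'.
Proof.
elim=> {X M t} [X M a b Hiso | i X X1 M gv ge hv he t dd _ IH] Y Z fV fE pV pE cV cE Hf Hgl.
  by eexists; apply: derivs_iso; exact: (glue_iso Hiso Hf Hgl).
set r := gts_rule i in dd *.
have Hg' : inj_morph (rL r) Y (fun v => fV (gv v)) (fun e => fE (ge e)).
  exact: comp_inj_morph (dd_m dd) Hf.
have Hdang : dangling r Y (fun v => fV (gv v)) (fun e => fE (ge e)).
  move=> e eY nh v vL vK.
  have gvX := (m_V (dd_m dd) vL).1.
  case: (boolP (imE X fE e)) => [/imEP[e0 e0X Ee]|nim].
    have nh0 : ~~ has (fun e' => ge e' == e0) (gE (rL r)).
      by apply: contra nh => /hasP[e' e'L /eqP E]; apply/hasP; exists e'; rewrite // E Ee.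
    have [s t'] := dd_dang dd e0X nh0 vL vK.
    rewrite -Ee; have [_ -> -> _] := imo_E Hf e0X.
    split=> /(imo_injV Hf _ gvX); [move/(_ (wf_src e0X)) | move/(_ (wf_tgt e0X))]; by [].
  have [[_ h1] [_ h2]] := gl_ep Hgl eY nim.
  have bad : forall m, obind t (step_track r X gv (gv v)) = Some m -> False.
    by move=> m; rewrite /step_track /inDV (LK_delV gv vL vK) andbF.
  by split=> E; [case: (h1 _ gvX (esym E)) | case: (h2 _ gvX (esym E))] => m /bad.
have [Y1 [hv' [he' dY]]] := apply_ex Hg' Hdang.
have HgV : {in gV (rL r), forall v, (fun v => fV (gv v)) v = fV (gv v)} by [].
have HgE : {in gE (rL r), forall v, (fun v => fE (ge v)) v = fE (ge v)} by [].
set F1V := f1V r hv hv' fV; set F1E := f1E r he he' fE.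
have Hf1 : inj_morph X1 Y1 F1V F1E := c_morph dd dY Hf HgV HgE.
have cDV := c_DV hv' dd Hf HgV; have cnew := c_newV_notD dd dY HgV.
have covV := c_covV dd dY Hf HgV; have covE := c_covE dd dY Hf HgE.
have ctxV := c_ctxV dd dY Hf HgV; have ctxE := c_ctxE dd dY Hf HgE.
have ctx1V y : y \in gV Y1 -> ~~ imV X1 F1V y -> (y \in gV Y) && ~~ imV X fV y.
  by move=> yY /negbTE nim; have := covV y yY; rewrite -/F1V nim.
have ctx1E y : y \in gE Y1 -> ~~ imE X1 F1E y -> (y \in gE Y) && ~~ imE X fE y.
  by move=> yY /negbTE nim; have := covE y yY; rewrite -/F1E nim.
have Hgl1 : glue X1 Y1 M Z F1V F1E t pV pE cV cE.
  split.
  - exact: gl_p Hgl.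
  - move=> y yY1 nim; case/andP: (ctx1V y yY1 nim) => yY nim0.
    have [c1 c2 c3] := gl_cV Hgl yY nim0; have [_ _ l _] := ctxV y yY nim0.
    by rewrite l.
  - move=> y1 y2 y1Y n1 y2Y n2.
    case/andP: (ctx1V _ y1Y n1) => a1 b1; case/andP: (ctx1V _ y2Y n2) => a2 b2.
    exact: (gl_cVinj Hgl).
  - move=> z /(gl_covV Hgl)[->|[y /andP[yY nim] <-]]; first by left.
    by right; exists y => //; have [_ -> _ ->] := ctxV y yY nim.
  - move=> y yY1 nim; case/andP: (ctx1E y yY1 nim) => yY nim0.
    have [c1 c2 c3] := gl_cE Hgl yY nim0; have [_ _ _ l _] := ctxE y yY nim0.
    by rewrite l.
  - move=> y1 y2 y1Y n1 y2Y n2.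
    case/andP: (ctx1E _ y1Y n1) => a1 b1; case/andP: (ctx1E _ y2Y n2) => a2 b2.
    exact: (gl_cEinj Hgl).
  - move=> z /(gl_covE Hgl)[->|[y /andP[yY nim] <-]]; first by left.
    by right; exists y => //; have [_ -> _ _ ->] := ctxE y yY nim.
  - move=> y yY1 nim; case/andP: (ctx1E y yY1 nim) => yY nim0.
    have [Dy _ [es et] _ _] := ctxE y yY nim0.
    have [e1 e2] := gl_ep Hgl yY nim0.
    case/andP: (dd_D_srctgt dY Dy) => Ds Dt.
    have H s b : inDV r Y (fun v => fV (gv v)) s ->
        glep X fV (fun x => obind t (step_track r X gv x)) pV cV s b -> glep X1 F1V t pV cV s b.
      move=> Ds' [h1 h2]; split.
        move=> nim1; apply: h1; apply: contra nim1 => /imVP[x xX E].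
        have [m] := h2 x xX E; rewrite /step_track; case: ifP => // Dx _ _.
        apply/imVP; exists x; first exact: (dd_DV dd Dx).1.
        by rewrite /F1V (cDV _ Dx).2.
      move=> x xX1 E; move: (dd_covV dd xX1) => /orP[Dx|Nx].
        have [_ E2] := cDV _ Dx.
        have xX : x \in gV X by case/andP: Dx.
        have [m] := h2 x xX (etrans (esym E2) E); rewrite /step_track Dx /= => -> ->.
        by exists m.
      by have := cnew _ Nx; rewrite -/F1V E Ds'.
    by rewrite es et; split; apply: H.
have [t' Hd'] := IH Y1 Z F1V F1E pV pE cV cE Hf1 Hgl1.
by eexists; apply: derivs_step dY Hd'.
Qed.

End Glue.

Section Restrict.
Variables (LV LE : finType).
Implicit Types (G H X Y M Z : graph LV LE).

Section R1.
Variables (G : graph LV LE) (pV pE : pred nat).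
Hypothesis h : forall e, e \in gE G -> pE e -> pV (src G e) && pV (tgt G e).
Lemma restrict_wf e : e \in [seq e <- gE G | pE e] ->
  (src G e \in [seq x <- gV G | pV x]) && (tgt G e \in [seq x <- gV G | pV x]).
Proof.
rewrite !mem_filter => /andP[pe eG]; case/andP: (h eG pe) => -> ->.
by rewrite wf_src ?wf_tgt.
Qed.
Definition restrict := @Graph LV LE [seq x <- gV G | pV x] [seq e <- gE G | pE e]
   (src G) (tgt G) (lab G) (mlab G) restrict_wf.
Lemma restrict_sub : subgraph restrict G.
Proof. by split=> x; rewrite /= mem_filter => /andP[_ ->]. Qed.
End R1.

Section RD.
Variables (r : rule LV LE) (G H : graph LV LE) (gv ge hv he : nat -> nat).
Hypothesis dd : dder r G H gv ge hv he.
Variables (pV pE : pred nat).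
Hypothesis hG : forall e, e \in gE G -> pE e -> pV (src G e) && pV (tgt G e).
Hypothesis HpV : {in gV (rL r), forall v, pV (gv v)}.
Hypothesis HpE : {in gE (rL r), forall v, pE (ge v)}.

Definition qV x := inDV r G gv x && pV x || newV r hv x.
Definition qE x := inDE r G ge x && pE x || newE r he x.

Lemma qV_hv s : s \in gV (rR r) -> qV (hv s).
Proof.
move=> sR; rewrite /qV; case: (boolP (s \in gV (rK r))) => sK.
  by rewrite (dd_KV dd sK) (K_inDV (dd_m dd) sK) HpV // (KL_V sK).1.
by rewrite (dd_newV_hv hv sR sK) orbT.
Qed.
Lemma qE_he s : s \in gE (rR r) -> qE (he s).
Proof.
move=> sR; rewrite /qE; case: (boolP (s \in gE (rK r))) => sK.
  by rewrite (dd_KE dd sK) (K_inDE (dd_m dd) sK) HpE //; case: (KL_E sK).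
by rewrite (dd_newE_he he sR sK) orbT.
Qed.

Lemma rq_wf e : e \in gE H -> qE e -> qV (src H e) && qV (tgt H e).
Proof.
move=> eH /orP[/andP[De pe]|Ne].
  have [_ -> -> _] := dd_DE dd De; case/andP: (dd_D_srctgt dd De) => Ds Dt.
  have eG : e \in gE G by case/andP: De.
  by rewrite /qV Ds Dt; case/andP: (hG eG pe) => -> ->.
have [-> ->] := dd_newE_src dd Ne; have [i1 _ _] := invE_spec Ne.
by rewrite !qV_hv ?wf_src ?wf_tgt.
Qed.

Definition Gr := restrict hG.
Definition Hr := restrict rq_wf.

Lemma restrict_dder : dder r Gr Hr gv ge hv he.
Proof.
have [[mV mE] iV iE] := dd_m dd.
have inDr x : inDV r Gr gv x = inDV r G gv x && pV x.
  by rewrite /inDV /= mem_filter; case: (pV x); case: (x \in gV G); rewrite ?andbT ?andbF.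
have inDEr x : inDE r Gr ge x = inDE r G ge x && pE x.
  by rewrite /inDE /= mem_filter; case: (pE x); case: (x \in gE G); rewrite ?andbT ?andbF.
split=> //.
- split; first split.
  + by move=> v vL /=; rewrite mem_filter HpV //; have [-> ->] := mV v vL.
  + by move=> e eL /=; rewrite mem_filter HpE //; have [-> -> -> ->] := mE e eL.
  + exact: iV.
  + exact: iE.
- move=> e /=; rewrite mem_filter => /andP[_ eG] nh v vL vK.
  exact: (dd_dang dd eG nh vL vK).
- split=> x; rewrite ?inDr ?inDEr => /andP[Dx px] /=; rewrite mem_filter /qV /qE ?Dx ?px /=.
    by have [-> ->] := dd_DV dd Dx.
  by have [-> -> -> ->] := dd_DE dd Dx.
- split; last by split; [move=> v vK; apply: (dd_KV dd vK) | move=> v vK; apply: (dd_KE dd vK)].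
  have [[cV cE] jV jE] := dd_co dd.
  split; first split.
  + by move=> v vR /=; rewrite mem_filter qV_hv //; have [-> ->] := cV v vR.
  + by move=> e eR /=; rewrite mem_filter qE_he //; have [-> -> -> ->] := cE e eR.
  + exact: jV.
  + exact: jE.
- split.
  + move=> v vR vK; rewrite inDr; apply/negP=> /andP[D _].
    by have := dd_newV_notD dd (dd_newV_hv hv vR vK); rewrite D.
  + move=> v vR vK; rewrite inDEr; apply/negP=> /andP[D _].
    by have := dd_newE_notD dd (dd_newE_he he vR vK); rewrite D.
  + move=> x /=; rewrite mem_filter => /andP[/orP[Dx|/newVP[v vR [vK E]]] _].
      by left; rewrite inDr.
    by right; exists v; rewrite // vK E eqxx.
  + move=> x /=; rewrite mem_filter => /andP[/orP[Dx|/newEP[v vR [vK E]]] _].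
      by left; rewrite inDEr.
    by right; exists v; rewrite // vK E eqxx.
Qed.

Lemma Hr_sub : inj_morph Hr H id id.
Proof. by split=> //; exact: restrict_sub. Qed.

End RD.

Lemma derivs_track_in (T : gts LV LE) X M t : derivs T X M t ->
  forall x m, t x = Some m -> m \in gV M.
Proof.
elim=> {X M t} [X M a b Hiso | i X X1 M gv ge hv he t dd _ IH] x m.
  case: ifP => // xX [<-]; case: Hiso => Ha _ _.
  exact: (imo_V Ha xX).1.
rewrite /step_track; case: ifP => //= _; exact: IH.
Qed.

Lemma iso_id G : iso_by G G id id.
Proof. by split=> //; [split=> //; split=> // | move=> x xG; exists x | move=> x xG; exists x]. Qed.

End Restrict.

Lemma par_indep_sym (LV LE : finType) (r1 r2 : rule LV LE) g1v g1e g2v g2e :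
  par_indep r1 r2 g1v g1e g2v g2e -> par_indep r2 r1 g2v g2e g1v g1e.
Proof. by case=> h1 h2; split=> x a b; rewrite andbC; [apply: h1|apply: h2]. Qed.

Section Indep.
Variables (LV LE : finType) (r1 r2 : rule LV LE) (G H1 : graph LV LE).
Variables (g1v g1e h1v h1e g2v g2e : nat -> nat).
Hypothesis d1 : dder r1 G H1 g1v g1e h1v h1e.
Hypothesis m2 : inj_morph (rL r2) G g2v g2e.
Hypothesis dang2 : dangling r2 G g2v g2e.
Hypothesis Hpi : par_indep r1 r2 g1v g1e g2v g2e.

Lemma ind_V x : imV (rL r2) g2v x -> ~~ delV r1 g1v x.
Proof.
move=> im2; apply/delVP=> [[v vL [vK E]]].
have im1 : imV (rL r1) g1v x by rewrite -E imV_in.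
case: Hpi => /(_ x im1 im2)/andP[/imVP[w wK E2] _] _.
have wL := (KL_V wK).1.
by move: vK; rewrite (m_injV (dd_m d1) vL wL (etrans E (esym E2))) wK.
Qed.
Lemma ind_E x : imE (rL r2) g2e x -> ~~ delE r1 g1e x.
Proof.
move=> im2; apply/delEP=> [[v vL [vK E]]].
have im1 : imE (rL r1) g1e x by rewrite -E imE_in.
case: Hpi => _ /(_ x im1 im2)/andP[/imEP[w wK E2] _].
have [wL _ _ _] := KL_E wK.
by move: vK; rewrite (m_injE (dd_m d1) vL wL (etrans E (esym E2))) wK.
Qed.
Lemma ind_DV v : v \in gV (rL r2) -> inDV r1 G g1v (g2v v).
Proof. by move=> vL; rewrite /inDV (m_V m2 vL).1 ind_V // imV_in. Qed.
Lemma ind_DE v : v \in gE (rL r2) -> inDE r1 G g1e (g2e v).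
Proof. by move=> vL; have [i _ _ _] := m_E m2 vL; rewrite /inDE i ind_E // imE_in. Qed.

Lemma ind_match : inj_morph (rL r2) H1 g2v g2e.
Proof.
have [[mV mE] iV iE] := m2.
split=> //; split.
- move=> v vL; have [i1 i2] := dd_DV d1 (ind_DV vL).
  by rewrite i1 i2 (mV v vL).2.
- move=> e eL; have [i1 i2 i3 i4] := dd_DE d1 (ind_DE eL).
  by rewrite i1 i2 i3 i4; have [_ -> -> ->] := mE e eL.
Qed.

Lemma ind_dang : dangling r2 H1 g2v g2e.
Proof.
move=> e eH nh v vL vK.
have gD := ind_DV vL.
case/orP: (dd_covE d1 eH) => [De|Ne].
  have [_ -> -> _] := dd_DE d1 De.
  by apply: dang2 vL vK => //; case/andP: De.
have [-> ->] := dd_newE_src d1 Ne; have [i1 i2 i3] := invE_spec Ne.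
have H s : s \in gV (rR r1) -> h1v s <> g2v v.
  move=> sR; case: (boolP (s \in gV (rK r1))) => sK.
    rewrite (dd_KV d1 sK) => E.
    have im1 : imV (rL r1) g1v (g2v v) by rewrite -E imV_in // (KL_V sK).1.
    case: Hpi => /(_ _ im1 (imV_in _ vL))/andP[_ /imVP[w wK E2]] _.
    by move: vK; rewrite -(m_injV m2 (KL_V wK).1 vL E2) wK.
  move=> E; have := dd_newV_notD d1 (dd_newV_hv h1v sR sK).
  by rewrite E gD.
by split; apply: H; rewrite ?wf_src ?wf_tgt.
Qed.
End Indep.

Section OneSide.
Variables (LV LE : finType) (r1 r2 : rule LV LE) (G H1 H2 M1 : graph LV LE).
Variables (g1v g1e h1v h1e g2v g2e h2v h2e k2v k2e : nat -> nat).
Hypothesis d1 : dder r1 G H1 g1v g1e h1v h1e.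
Hypothesis d2 : dder r2 G H2 g2v g2e h2v h2e.
Hypothesis Hpi : par_indep r1 r2 g1v g1e g2v g2e.
Hypothesis dY : dder r2 H1 M1 g2v g2e k2v k2e.

Definition clA x := inDV r1 G g1v x && ~~ delV r2 g2v x.
Definition clAE x := inDE r1 G g1e x && ~~ delE r2 g2e x.

Let Hpi' := par_indep_sym Hpi.

Lemma h1_notdel v : v \in gV (rR r1) -> ~~ delV r2 g2v (h1v v).
Proof.
move=> vR; case: (boolP (v \in gV (rK r1))) => vK.
  rewrite (dd_KV d1 vK); apply: (ind_V d2 Hpi'); rewrite imV_in //; exact: (KL_V vK).1.
apply/delVP=> [[w wL [wK E]]]; have := dd_newV_notD d1 (dd_newV_hv h1v vR vK).
by rewrite -E (ind_DV d1 (dd_m d2) Hpi wL).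
Qed.
Lemma h1_notdelE v : v \in gE (rR r1) -> ~~ delE r2 g2e (h1e v).
Proof.
move=> vR; case: (boolP (v \in gE (rK r1))) => vK.
  rewrite (dd_KE d1 vK); apply: (ind_E d2 Hpi'); rewrite imE_in //; by case: (KL_E vK).
apply/delEP=> [[w wL [wK E]]]; have := dd_newE_notD d1 (dd_newE_he h1e vR vK).
by rewrite -E (ind_DE d1 (dd_m d2) Hpi wL).
Qed.

Lemma S1 x : x \in gV M1 -> [|| clA x, newV r1 h1v x | newV r2 k2v x].
Proof.
move=> xM; case/orP: (dd_covV dY xM) => [/andP[xH nd]|->]; last by rewrite !orbT.
case/orP: (dd_covV d1 xH) => [D|->]; last by rewrite orbT.
by rewrite /clA D nd.
Qed.
Lemma S1E x : x \in gE M1 -> [|| clAE x, newE r1 h1e x | newE r2 k2e x].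
Proof.
move=> xM; case/orP: (dd_covE dY xM) => [/andP[xH nd]|->]; last by rewrite !orbT.
case/orP: (dd_covE d1 xH) => [D|->]; last by rewrite orbT.
by rewrite /clAE D nd.
Qed.
Lemma S2 x : clA x -> x \in gV M1 /\ lab M1 x = lab G x.
Proof.
case/andP=> D nd; have [i1 i2] := dd_DV d1 D.
have D2 : inDV r2 H1 g2v x by rewrite /inDV i1.
by have [-> ->] := dd_DV dY D2.
Qed.
Lemma S2E x : clAE x -> [/\ x \in gE M1, src M1 x = src G x, tgt M1 x = tgt G x & mlab M1 x = mlab G x].
Proof.
case/andP=> D nd; have [i1 i2 i3 i4] := dd_DE d1 D.
have D2 : inDE r2 H1 g2e x by rewrite /inDE i1.
by have [-> -> -> ->] := dd_DE dY D2.
Qed.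
Lemma S3 v : v \in gV (rR r1) -> h1v v \in gV M1 /\ lab M1 (h1v v) = lab (rR r1) v.
Proof.
move=> vR; have [i1 i2] := dd_coV d1 vR.
have D2 : inDV r2 H1 g2v (h1v v) by rewrite /inDV i1 h1_notdel.
by have [-> ->] := dd_DV dY D2.
Qed.
Lemma S3E v : v \in gE (rR r1) -> [/\ h1e v \in gE M1, src M1 (h1e v) = h1v (src (rR r1) v),
   tgt M1 (h1e v) = h1v (tgt (rR r1) v) & mlab M1 (h1e v) = mlab (rR r1) v].
Proof.
move=> vR; have [i1 i2 i3 i4] := dd_coE d1 vR.
have D2 : inDE r2 H1 g2e (h1e v) by rewrite /inDE i1 h1_notdelE.
by have [-> -> -> ->] := dd_DE dY D2.
Qed.
Lemma S4 v : v \in gV (rR r2) -> k2v v \in gV M1 /\ lab M1 (k2v v) = lab (rR r2) v.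
Proof. move=> vR; exact: (dd_coV dY vR). Qed.
Lemma S4E v : v \in gE (rR r2) -> [/\ k2e v \in gE M1, src M1 (k2e v) = k2v (src (rR r2) v),
   tgt M1 (k2e v) = k2v (tgt (rR r2) v) & mlab M1 (k2e v) = mlab (rR r2) v].
Proof. move=> vR; exact: (dd_coE dY vR). Qed.
Lemma S5 x : clA x -> ~~ newV r1 h1v x && ~~ newV r2 k2v x.
Proof.
case/andP=> D nd; apply/andP; split.
  by apply/negP=> N; have := dd_newV_notD d1 N; rewrite D.
apply: contraL nd => N; have := dd_newV_notD dY N.
by rewrite /inDV (dd_DV d1 D).1 /= negbK.
Qed.
Lemma S5E x : clAE x -> ~~ newE r1 h1e x && ~~ newE r2 k2e x.
Proof.
case/andP=> D nd; apply/andP; split.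
  by apply/negP=> N; have := dd_newE_notD d1 N; rewrite D.
apply: contraL nd => N; have := dd_newE_notD dY N.
by have [i1 _ _ _] := dd_DE d1 D; rewrite /inDE i1 /= negbK.
Qed.
Lemma S6 x : newV r2 k2v x -> ~~ newV r1 h1v x.
Proof.
move=> N; apply/negP=> /invV_spec[i1 i2 i3].
by have := dd_newV_notD dY N; rewrite -i3 /inDV (dd_coV d1 i1).1 h1_notdel.
Qed.
Lemma S6E x : newE r2 k2e x -> ~~ newE r1 h1e x.
Proof.
move=> N; apply/negP=> /invE_spec[i1 i2 i3].
by have [j1 _ _ _] := dd_coE d1 i1; have := dd_newE_notD dY N; rewrite -i3 /inDE j1 h1_notdelE.
Qed.
Lemma S11 e : clAE e -> clA (src G e) && clA (tgt G e).
Proof.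
case/andP=> D nd; have [i1 i2 i3 i4] := dd_DE d1 D.
have D2 : inDE r2 H1 g2e e by rewrite /inDE i1.
case/andP: (dd_D_srctgt dY D2) => /andP[_ a] /andP[_ b].
move: a b; rewrite i2 i3 => a b.
by case/andP: (dd_D_srctgt d1 D) => c d; rewrite /clA c d a b.
Qed.
Lemma S12 v : v \in gV (rK r1) -> h1v v = g1v v /\ clA (g1v v).
Proof.
move=> vK; split; first exact: (dd_KV d1 vK).
rewrite /clA (K_inDV (dd_m d1) vK) /=; apply: (ind_V d2 Hpi').
by rewrite imV_in // (KL_V vK).1.
Qed.
Lemma S13 v : v \in gV (rK r2) -> k2v v = g2v v /\ clA (g2v v).
Proof.
move=> vK; have vL := (KL_V vK).1; split; first exact: (dd_KV dY vK).
by rewrite /clA (ind_DV d1 (dd_m d2) Hpi vL) (K_notdelV (dd_m d2) vK).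
Qed.
Lemma clA_sym x : clA x = inDV r2 G g2v x && ~~ delV r1 g1v x.
Proof. by rewrite /clA /inDV; case: (x \in gV G); case: delV; case: delV. Qed.
Lemma clAE_sym x : clAE x = inDE r2 G g2e x && ~~ delE r1 g1e x.
Proof. by rewrite /clAE /inDE; case: (x \in gE G); case: delE; case: delE. Qed.
End OneSide.

Section Diamond.
Variables (LV LE : finType) (r1 r2 : rule LV LE) (G H1 H2 M1 M2 : graph LV LE).
Variables (g1v g1e h1v h1e g2v g2e h2v h2e k1v k1e k2v k2e : nat -> nat).
Hypothesis d1 : dder r1 G H1 g1v g1e h1v h1e.
Hypothesis d2 : dder r2 G H2 g2v g2e h2v h2e.
Hypothesis Hpi : par_indep r1 r2 g1v g1e g2v g2e.
Hypothesis dY1 : dder r2 H1 M1 g2v g2e k2v k2e.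
Hypothesis dY2 : dder r1 H2 M2 g1v g1e k1v k1e.

Let Hpi' := par_indep_sym Hpi.
Let A x := clA r1 r2 G g1v g2v x.
Let AE x := clAE r1 r2 G g1e g2e x.
Let AA x : A x = clA r2 r1 G g2v g1v x := clA_sym r1 r2 G g1v g2v x.
Let AAE x : AE x = clAE r2 r1 G g2e g1e x := clAE_sym r1 r2 G g1e g2e x.

Definition FV x := if newV r1 h1v x then k1v (invV r1 h1v x) else if newV r2 k2v x then h2v (invV r2 k2v x) else x.
Definition FE x := if newE r1 h1e x then k1e (invE r1 h1e x) else if newE r2 k2e x then h2e (invE r2 k2e x) else x.

Lemma F_A x : A x -> FV x = x.
Proof. by move/(S5 d1 dY1)/andP=> [/negbTE a /negbTE b]; rewrite /FV a b. Qed.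
Lemma FE_A x : AE x -> FE x = x.
Proof. by move/(S5E d1 dY1)/andP=> [/negbTE a /negbTE b]; rewrite /FE a b. Qed.

Lemma F_h1 v : v \in gV (rR r1) -> FV (h1v v) = k1v v.
Proof.
move=> vR; case: (boolP (v \in gV (rK r1))) => vK.
  have [-> a] := S12 d1 d2 Hpi vK; rewrite F_A //.
  by have [-> _] := S13 d2 d1 Hpi' dY2 vK.
by rewrite /FV (dd_newV_hv h1v vR vK) invV_hv //; exact: dd_injV d1.
Qed.
Lemma FE_h1 v : v \in gE (rR r1) -> FE (h1e v) = k1e v.
Proof.
move=> vR; case: (boolP (v \in gE (rK r1))) => vK.
  rewrite (dd_KE d1 vK) FE_A ?(dd_KE dY2 vK) //.
  rewrite /AE /clAE (K_inDE (dd_m d1) vK) /=.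
  by apply: (ind_E d2 Hpi'); rewrite imE_in //; case: (KL_E vK).
by rewrite /FE (dd_newE_he h1e vR vK) invE_he //; exact: dd_injE d1.
Qed.
Lemma F_k2 v : v \in gV (rR r2) -> FV (k2v v) = h2v v.
Proof.
move=> vR; case: (boolP (v \in gV (rK r2))) => vK.
  have [-> a] := S13 d1 d2 Hpi dY1 vK; rewrite F_A //.
  by have [-> _] := S12 d2 d1 Hpi' vK.
have N := dd_newV_hv k2v vR vK.
by rewrite /FV (negbTE (S6 d1 d2 Hpi dY1 N)) N invV_hv //; exact: dd_injV dY1.
Qed.
Lemma FE_k2 v : v \in gE (rR r2) -> FE (k2e v) = h2e v.
Proof.
move=> vR; case: (boolP (v \in gE (rK r2))) => vK.
  have [vL _ _ _] := KL_E vK.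
  rewrite (dd_KE dY1 vK) FE_A ?(dd_KE d2 vK) //.
  by rewrite /AE /clAE (ind_DE d1 (dd_m d2) Hpi vL) (K_notdelE (dd_m d2) vK).
have N := dd_newE_he k2e vR vK.
by rewrite /FE (negbTE (S6E d1 d2 Hpi dY1 N)) N invE_he //; exact: dd_injE dY1.
Qed.

Lemma Fcl x : x \in gV M1 ->
  [\/ A x /\ FV x = x,
      exists2 v, (v \in gV (rR r1)) && (v \notin gV (rK r1)) & x = h1v v /\ FV x = k1v v |
      exists2 v, (v \in gV (rR r2)) && (v \notin gV (rK r2)) & x = k2v v /\ FV x = h2v v].
Proof.
move/(S1 d1 dY1)=> /or3P[a|/invV_spec[i1 i2 i3]|/invV_spec[i1 i2 i3]].
- by apply: Or31; rewrite F_A.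
- by apply: Or32; exists (invV r1 h1v x); rewrite ?i1 ?i2 //; split; [by rewrite i3 | by rewrite -[in FV x]i3 F_h1].
- by apply: Or33; exists (invV r2 k2v x); rewrite ?i1 ?i2 //; split; [by rewrite i3 | by rewrite -[in FV x]i3 F_k2].
Qed.
Lemma FEcl x : x \in gE M1 ->
  [\/ AE x /\ FE x = x,
      exists2 v, (v \in gE (rR r1)) && (v \notin gE (rK r1)) & x = h1e v /\ FE x = k1e v |
      exists2 v, (v \in gE (rR r2)) && (v \notin gE (rK r2)) & x = k2e v /\ FE x = h2e v].
Proof.
move/(S1E d1 dY1)=> /or3P[a|/invE_spec[i1 i2 i3]|/invE_spec[i1 i2 i3]].
- by apply: Or31; rewrite FE_A.
- by apply: Or32; exists (invE r1 h1e x); rewrite ?i1 ?i2 //; split; [by rewrite i3 | by rewrite -[in FE x]i3 FE_h1].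
- by apply: Or33; exists (invE r2 k2e x); rewrite ?i1 ?i2 //; split; [by rewrite i3 | by rewrite -[in FE x]i3 FE_k2].
Qed.

Lemma diamond_iso : iso_by M1 M2 FV FE.
Proof.
split; first split; first split.
- move=> x /[dup] xM /Fcl [[a ->]|[v /andP[vR vK] [-> ->]]|[v /andP[vR vK] [-> ->]]].
  + have a' : clA r2 r1 G g2v g1v x by rewrite -AA.
    by have [-> ->] := S2 d2 dY2 a'; rewrite (S2 d1 dY1 a).2.
  + by rewrite (S4 dY2 vR).1 (S4 dY2 vR).2 (S3 d1 d2 Hpi dY1 vR).2.
  + by rewrite (S3 d2 d1 Hpi' dY2 vR).1 (S3 d2 d1 Hpi' dY2 vR).2 (S4 dY1 vR).2.
- move=> x /[dup] xM /FEcl [[a ->]|[v /andP[vR vK] [-> ->]]|[v /andP[vR vK] [-> ->]]].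
  + have a' : clAE r2 r1 G g2e g1e x by rewrite -AAE.
    have [-> -> -> ->] := S2E d2 dY2 a'; have [_ -> -> ->] := S2E d1 dY1 a.
    by case/andP: (S11 d1 dY1 a) => s t; rewrite !F_A.
  + have [-> -> -> ->] := S4E dY2 vR; have [_ -> -> ->] := S3E d1 d2 Hpi dY1 vR.
    by rewrite !F_h1 ?wf_src ?wf_tgt.
  + have [-> -> -> ->] := S3E d2 d1 Hpi' dY2 vR; have [_ -> -> ->] := S4E dY1 vR.
    by rewrite !F_k2 ?wf_src ?wf_tgt.
- have nA y : clA r2 r1 G g2v g1v y -> ~~ newV r2 h2v y && ~~ newV r1 k1v y := S5 d2 dY2 (x:=y).
  have n12 y : newV r1 k1v y -> ~~ newV r2 h2v y := S6 d2 d1 Hpi' dY2 (x:=y).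
  have AimA y : A y -> clA r2 r1 G g2v g1v y by rewrite AA.
  move=> x y /Fcl cx /Fcl cy.
  case: cx => [[a ->]|[v /andP[vR vK] [-> ->]]|[v /andP[vR vK] [-> ->]]];
  case: cy => [[b ->]|[w /andP[wR wK] [-> ->]]|[w /andP[wR wK] [-> ->]]] //.
  + move=> E; have := nA _ (AimA _ a); rewrite E (dd_newV_hv k1v wR wK).
    by rewrite andbF.
  + move=> E; have := nA _ (AimA _ a); rewrite E (dd_newV_hv h2v wR wK).
    by [].
  + move=> E; have := nA _ (AimA _ b); rewrite -E (dd_newV_hv k1v vR vK).
    by rewrite andbF.
  + by move/(dd_injV dY2 vR wR) ->.
  + move=> E; have := n12 _ (dd_newV_hv k1v vR vK); rewrite E (dd_newV_hv h2v wR wK).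
    by [].
  + move=> E; have := nA _ (AimA _ b); rewrite -E (dd_newV_hv h2v vR vK).
    by [].
  + move=> E; have := n12 _ (dd_newV_hv k1v wR wK); rewrite -E (dd_newV_hv h2v vR vK).
    by [].
  + by move/(dd_injV d2 vR wR) ->.
- have nA y : clAE r2 r1 G g2e g1e y -> ~~ newE r2 h2e y && ~~ newE r1 k1e y := S5E d2 dY2 (x:=y).
  have n12 y : newE r1 k1e y -> ~~ newE r2 h2e y := S6E d2 d1 Hpi' dY2 (x:=y).
  have AimA y : AE y -> clAE r2 r1 G g2e g1e y by rewrite AAE.
  move=> x y /FEcl cx /FEcl cy.
  case: cx => [[a ->]|[v /andP[vR vK] [-> ->]]|[v /andP[vR vK] [-> ->]]];
  case: cy => [[b ->]|[w /andP[wR wK] [-> ->]]|[w /andP[wR wK] [-> ->]]] //.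
  + move=> E; have := nA _ (AimA _ a); rewrite E (dd_newE_he k1e wR wK).
    by rewrite andbF.
  + move=> E; have := nA _ (AimA _ a); rewrite E (dd_newE_he h2e wR wK).
    by [].
  + move=> E; have := nA _ (AimA _ b); rewrite -E (dd_newE_he k1e vR vK).
    by rewrite andbF.
  + by move/(dd_injE dY2 vR wR) ->.
  + move=> E; have := n12 _ (dd_newE_he k1e vR vK); rewrite E (dd_newE_he h2e wR wK).
    by [].
  + move=> E; have := nA _ (AimA _ b); rewrite -E (dd_newE_he h2e vR vK).
    by [].
  + move=> E; have := n12 _ (dd_newE_he k1e wR wK); rewrite -E (dd_newE_he h2e vR vK).
    by [].
  + by move/(dd_injE d2 vR wR) ->.
- move=> y /(S1 d2 dY2)/or3P[a|/invV_spec[i1 i2 i3]|/invV_spec[i1 i2 i3]].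
  + have a' : A y by rewrite AA.
    by exists y; [exact: (S2 d1 dY1 a').1 | rewrite F_A].
  + by exists (k2v (invV r2 h2v y)); [exact: (S4 dY1 i1).1 | rewrite F_k2].
  + by exists (h1v (invV r1 k1v y)); [exact: (S3 d1 d2 Hpi dY1 i1).1 | rewrite F_h1].
- move=> y /(S1E d2 dY2)/or3P[a|/invE_spec[i1 i2 i3]|/invE_spec[i1 i2 i3]].
  + have a' : AE y by rewrite AAE.
    by exists y; [by case: (S2E d1 dY1 a') | rewrite FE_A].
  + by exists (k2e (invE r2 h2e y)); [by case: (S4E dY1 i1) | rewrite FE_k2].
  + by exists (h1e (invE r1 k1e y)); [by case: (S3E d1 d2 Hpi dY1 i1) | rewrite FE_h1].
Qed.
End Diamond.

Lemma imV_id (LV LE : finType) (L : graph LV LE) y : imV L id y = (y \in gV L).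
Proof. by apply/imVP/idP => [[v vL <-]|yL] //; exists y. Qed.
Lemma imE_id (LV LE : finType) (L : graph LV LE) y : imE L id y = (y \in gE L).
Proof. by apply/imEP/idP => [[v vL <-]|yL] //; exists y. Qed.

Definition NZ (LV LE : finType) (M : graph LV LE) := (sumn (gV M)).+1.
Definition NEZ (LV LE : finType) (M : graph LV LE) := (sumn (gE M)).+1.

Section Zc.
Variables (LV LE : finType) (G M : graph LV LE) (pV pE : pred nat) (t0 : nat -> option nat).
Hypothesis hZ : forall e, e \in gE G -> ~~ pE e -> forall s, (s = src G e \/ s = tgt G e) -> pV s ->
   exists2 m, t0 s = Some m & m \in gV M.

Definition epZ y := if pV y then odflt 0 (t0 y) else NZ M + y.
Definition ZV := gV M ++ [seq NZ M + x | x <- [seq x <- gV G | ~~ pV x]].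
Definition ZE := gE M ++ [seq NEZ M + x | x <- [seq x <- gE G | ~~ pE x]].
Definition srcZ e := if NEZ M <= e then epZ (src G (e - NEZ M)) else src M e.
Definition tgtZ e := if NEZ M <= e then epZ (tgt G (e - NEZ M)) else tgt M e.
Definition labZ x := if NZ M <= x then lab G (x - NZ M) else lab M x.
Definition mlabZ x := if NEZ M <= x then mlab G (x - NEZ M) else mlab M x.

Lemma M_N x : x \in gV M -> (NZ M <= x) = false.
Proof. by move=> h; rewrite leqNgt ltnS leq_sumn. Qed.
Lemma M_NE x : x \in gE M -> (NEZ M <= x) = false.
Proof. by move=> h; rewrite leqNgt ltnS leq_sumn. Qed.

Lemma memZV x : (x \in ZV) = (x \in gV M) || has (fun y => (y \in gV G) && ~~ pV y && (NZ M + y == x)) (gV G).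
Proof.
rewrite mem_cat; congr (_ || _); apply/mapP/hasP=> [[y]|[y yG /andP[/andP[_ py] /eqP <-]]].
  by rewrite mem_filter => /andP[py yG] ->; exists y; rewrite // yG py eqxx.
by exists y; rewrite // mem_filter py.
Qed.
Lemma memZE x : (x \in ZE) = (x \in gE M) || has (fun y => (y \in gE G) && ~~ pE y && (NEZ M + y == x)) (gE G).
Proof.
rewrite mem_cat; congr (_ || _); apply/mapP/hasP=> [[y]|[y yG /andP[/andP[_ py] /eqP <-]]].
  by rewrite mem_filter => /andP[py yG] ->; exists y; rewrite // yG py eqxx.
by exists y; rewrite // mem_filter py.
Qed.

Lemma ctx_inZ y : y \in gV G -> ~~ pV y -> NZ M + y \in ZV.
Proof. by move=> yG py; rewrite memZV; apply/orP; right; apply/hasP; exists y; rewrite // yG py eqxx. Qed.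
Lemma ctxE_inZ y : y \in gE G -> ~~ pE y -> NEZ M + y \in ZE.
Proof. by move=> yG py; rewrite memZE; apply/orP; right; apply/hasP; exists y; rewrite // yG py eqxx. Qed.

Lemma epZ_in e : e \in gE G -> ~~ pE e -> (epZ (src G e) \in ZV) && (epZ (tgt G e) \in ZV).
Proof.
move=> eG pe.
have H s : (s = src G e \/ s = tgt G e) -> s \in gV G -> epZ s \in ZV.
  move=> hs sG; rewrite /epZ; case: ifP => ps.
    have [m -> mM] := hZ eG pe hs ps; by rewrite mem_cat mM.
  by apply: ctx_inZ; rewrite ?ps.
by rewrite !H ?wf_src ?wf_tgt //; [right|left].
Qed.

Lemma wfZ e : e \in ZE -> (srcZ e \in ZV) && (tgtZ e \in ZV).
Proof.
rewrite memZE => /orP[eM|/hasP[y yG /andP[/andP[_ py] /eqP <-]]].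
  by rewrite /srcZ /tgtZ M_NE // !mem_cat wf_src ?wf_tgt.
by rewrite /srcZ /tgtZ leq_addr addKn epZ_in.
Qed.

Definition Zg := @Graph LV LE ZV ZE srcZ tgtZ labZ mlabZ wfZ.

Lemma Zg_p : inj_morph M Zg id id.
Proof.
split=> //; split=> x xM /=.
  by rewrite mem_cat xM /labZ M_N.
by rewrite mem_cat xM /srcZ /tgtZ /mlabZ M_NE.
Qed.
End Zc.

Section Side.
Variables (LV LE : finType) (r : rule LV LE) (G H M : graph LV LE) (gv ge hv he : nat -> nat).
Hypothesis dd : dder r G H gv ge hv he.
Variables (pV pE : pred nat).
Hypothesis hG : forall e, e \in gE G -> pE e -> pV (src G e) && pV (tgt G e).
Hypothesis HpV : {in gV (rL r), forall v, pV (gv v)}.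
Hypothesis HpE : {in gE (rL r), forall v, pE (ge v)}.
Variables (t0 t : nat -> option nat).
Hypothesis hZ : forall e, e \in gE G -> ~~ pE e -> forall s, (s = src G e \/ s = tgt G e) -> pV s ->
   exists2 m, t0 s = Some m & m \in gV M.
Hypothesis hB : forall e, e \in gE G -> ~~ pE e -> forall s, (s = src G e \/ s = tgt G e) -> pV s ->
   exists m, t0 s = Some m /\ t s = Some m.

Let Hr1 := Hr dd hG HpV.

Lemma ctx_D y : y \in gV G -> ~~ pV y -> inDV r G gv y.
Proof.
move=> yG py; rewrite /inDV yG /=; apply/negP=> /delVP [v vL [_ E]].
by move: py; rewrite -E HpV.
Qed.
Lemma ctx_DE y : y \in gE G -> ~~ pE y -> inDE r G ge y.
Proof.
move=> yG py; rewrite /inDE yG /=; apply/negP=> /delEP [v vL [_ E]].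
by move: py; rewrite -E HpE.
Qed.

Lemma ctxV_iff y : y \in gV H -> (y \notin gV Hr1) = (y \in gV G) && ~~ pV y.
Proof.
move=> yH; rewrite /Hr1 /= mem_filter yH andbT /qV.
case/orP: (dd_covV dd yH) => [D|N].
  have nN : newV r hv y = false by apply/negP=> N; have := dd_newV_notD dd N; rewrite D.
  by rewrite D nN orbF /=; case/andP: D => ->.
rewrite N orbT /=; apply/esym/negP=> /andP[yG py].
by have := dd_newV_notD dd N; rewrite ctx_D.
Qed.
Lemma ctxE_iff y : y \in gE H -> (y \notin gE Hr1) = (y \in gE G) && ~~ pE y.
Proof.
move=> yH; rewrite /Hr1 /= mem_filter yH andbT /qE.
case/orP: (dd_covE dd yH) => [D|N].
  have nN : newE r he y = false by apply/negP=> N; have := dd_newE_notD dd N; rewrite D.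
  by rewrite D nN orbF /=; case/andP: D => ->.
rewrite N orbT /=; apply/esym/negP=> /andP[yG py].
by have := dd_newE_notD dd N; rewrite ctx_DE.
Qed.

Lemma side_glue : glue Hr1 H M (Zg hZ) id id t id id (addn (NZ M)) (addn (NEZ M)).
Proof.
have ctxV y : y \in gV H -> ~~ imV Hr1 id y -> (y \in gV G) && ~~ pV y.
  by move=> yH; rewrite imV_id ctxV_iff.
have ctxE y : y \in gE H -> ~~ imE Hr1 id y -> (y \in gE G) && ~~ pE y.
  by move=> yH; rewrite imE_id ctxE_iff.
split.
- exact: Zg_p.
- move=> y yH /(ctxV _ yH) /andP[yG py]; rewrite /= ctx_inZ // imV_id.
  rewrite /labZ leq_addr addKn (dd_DV dd (ctx_D yG py)).2; split=> //.
  by apply/negP=> /M_N; rewrite leq_addr.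
- by move=> y1 y2 _ _ _ _ /addnI.
- move=> z /=; rewrite memZV => /orP[zM|/hasP[y yG /andP[/andP[_ py] /eqP <-]]].
    by left; rewrite imV_id.
  right; exists y => //; have yH := (dd_DV dd (ctx_D yG py)).1.
  by rewrite yH imV_id ctxV_iff // yG py.
- move=> y yH /(ctxE _ yH) /andP[yG py]; rewrite /= ctxE_inZ // imE_id.
  have [_ _ _ ->] := dd_DE dd (ctx_DE yG py).
  rewrite /mlabZ leq_addr addKn; split=> //. by apply/negP=> /M_NE; rewrite leq_addr.
- by move=> y1 y2 _ _ _ _ /addnI.
- move=> z /=; rewrite memZE => /orP[zM|/hasP[y yG /andP[/andP[_ py] /eqP <-]]].
    by left; rewrite imE_id.
  right; exists y => //; have [yH _ _ _] := dd_DE dd (ctx_DE yG py).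
  by rewrite yH imE_id ctxE_iff // yG py.
- move=> y yH /(ctxE _ yH) /andP[yG py].
  have De := ctx_DE yG py.
  have [_ es et _] := dd_DE dd De.
  case/andP: (dd_D_srctgt dd De) => Ds Dt.
  have K s : (s = src G y \/ s = tgt G y) -> inDV r G gv s ->
      glep Hr1 id t id (addn (NZ M)) s (epZ M pV t0 s).
    move=> hs Ds'; have sG : s \in gV G by case/andP: Ds'.
    have sH := (dd_DV dd Ds').1.
    split.
      rewrite imV_id ctxV_iff // sG /= => ps; by rewrite /epZ (negbTE ps).
    move=> x xHr /= Ex; subst s.
    have px : pV x.
      move: xHr; rewrite /Hr1 /= mem_filter /qV => /andP[/orP[/andP[_ ->]//|N] _].
      by have := dd_newV_notD dd N; rewrite Ds'.
    have [m [e1 e2]] := hB yG py hs px.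
    by exists m; rewrite // /epZ px e1.
  rewrite /= es et /srcZ /tgtZ leq_addr !addKn.
  by split; apply: K => //; [left|right].
Qed.
End Side.

Lemma same_iso (LV LE : finType) (r : rule LV LE) G H1 H2 g1v g1e h1v h1e g2v g2e h2v h2e :
  dder r G H1 g1v g1e h1v h1e -> dder r G H2 g2v g2e h2v h2e ->
  {in gV (rL r), g1v =1 g2v} -> {in gE (rL r), g1e =1 g2e} ->
  iso_by H1 H2 (f1V r h1v h2v id) (f1E r h1e h2e id).
Proof.
move=> d1 d2 Ev Ee.
have HgV : {in gV (rL r), forall v, g2v v = id (g1v v)} by move=> v vL; rewrite Ev.
have HgE : {in gE (rL r), forall v, g2e v = id (g1e v)} by move=> v vL; rewrite Ee.
have Hf : inj_morph G G id id by case: (iso_id G).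
split; first exact: (c_morph d1 d2 Hf HgV HgE).
  move=> y yH; case/orP: (c_covV d1 d2 Hf HgV yH) => [/imVP[x xH E]|/andP[yG]].
    by exists x.
  by rewrite imV_id yG.
move=> y yH; case/orP: (c_covE d1 d2 Hf HgE yH) => [/imEP[x xH E]|/andP[yG]].
  by exists x.
by rewrite imE_id yG.
Qed.

Unset Implicit Arguments.

Theorem theorem5p2 (LV LE : finType) (T : gts LV LE) (D : graph LV LE -> Prop) :
  (forall (i1 i2 : gts_I T) (G H1 H2 : graph LV LE)
          (g1v g1e h1v h1e g2v g2e h2v h2e : nat -> nat),
      critical_pair i1 i2 G H1 H2 g1v g1e h1v h1e g2v g2e h2v h2e ->
      sclosure D G ->
      strongly_joinable i1 i2 G H1 H2 g1v g2v) ->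
  locally_confluent_on T D.
Proof.
move=> Hcp G H1 H2 DG [i1 [g1v [g1e [h1v [h1e d1]]]]] [i2 [g2v [g2e [h2v [h2e d2]]]]].
case: (classic (par_indep (gts_rule i1) (gts_rule i2) g1v g1e g2v g2e)) => Hpi.
  have Hpi' := par_indep_sym Hpi.
  have [M1 [k2v [k2e dY1]]] := apply_ex (ind_match d1 (dd_m d2) Hpi) (ind_dang d1 (dd_m d2) (dd_dang d2) Hpi).
  have [M2 [k1v [k1e dY2]]] := apply_ex (ind_match d2 (dd_m d1) Hpi') (ind_dang d2 (dd_m d1) (dd_dang d1) Hpi').
  exists M2; do 2 eexists; split.
    apply: (derivs_step dY1); apply: derivs_iso; exact: (diamond_iso d1 d2 Hpi dY1 dY2).
  apply: (derivs_step dY2); apply: derivs_iso; exact: iso_id.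
case: (classic (i1 = i2 /\ ({in gV (rL (gts_rule i1)), g1v =1 g2v} /\
                            {in gE (rL (gts_rule i1)), g1e =1 g2e}))) => [[Ei [Ev Ee]]|Hnc].
  subst i2; exists H2; do 2 eexists; split; apply: derivs_iso.
    exact: (same_iso d1 d2 Ev Ee).
  exact: iso_id.
pose pV x := imV (rL (gts_rule i1)) g1v x || imV (rL (gts_rule i2)) g2v x.
pose pE x := imE (rL (gts_rule i1)) g1e x || imE (rL (gts_rule i2)) g2e x.
have hG : forall e, e \in gE G -> pE e -> pV (src G e) && pV (tgt G e).
  move=> e eG /orP[/imEP[e0 e0L <-]|/imEP[e0 e0L <-]].
    have [_ -> -> _] := m_E (dd_m d1) e0L.
    by rewrite /pV !imV_in ?wf_src ?wf_tgt.
  have [_ -> -> _] := m_E (dd_m d2) e0L.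
  by rewrite /pV !imV_in ?wf_src ?wf_tgt ?orbT.
have Hp1V : {in gV (rL (gts_rule i1)), forall v, pV (g1v v)} by move=> v vL; rewrite /pV imV_in.
have Hp1E : {in gE (rL (gts_rule i1)), forall v, pE (g1e v)} by move=> v vL; rewrite /pE imE_in.
have Hp2V : {in gV (rL (gts_rule i2)), forall v, pV (g2v v)} by move=> v vL; rewrite /pV imV_in ?orbT.
have Hp2E : {in gE (rL (gts_rule i2)), forall v, pE (g2e v)} by move=> v vL; rewrite /pE imE_in ?orbT.
have dr1 := restrict_dder d1 hG Hp1V Hp1E.
have dr2 := restrict_dder d2 hG Hp2V Hp2E.
have Hcrit : critical_pair i1 i2 (Gr hG) (Hr d1 hG Hp1V) (Hr d2 hG Hp2V)
                 g1v g1e h1v h1e g2v g2e h2v h2e.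
  split=> //.
    by split=> x; rewrite /= mem_filter => /andP[].
  by move=> E H; apply: Hnc.
have Hcl : sclosure D (Gr hG) := scl_sub (scl_base DG) (restrict_sub hG).
case: (Hcp _ _ _ _ _ _ _ _ _ _ _ _ _ Hcrit Hcl) => M [t1 [t2 [dj1 dj2 Hp]]].
have bnd : forall e, e \in gE G -> ~~ pE e -> forall s, (s = src G e \/ s = tgt G e) -> pV s ->
   exists m, t1 s = Some m /\ t2 s = Some m.
  move=> e eG pe s hs ps.
  have sG : s \in gV G by case: hs => ->; [exact: wf_src | exact: wf_tgt].
  have D1 : inDV (gts_rule i1) (Gr hG) g1v s.
    rewrite /inDV /= mem_filter ps sG /=; apply/negP => /delVP[v vL [vK E]].
    have nh : ~~ has (fun e' => g1e e' == e) (gE (rL (gts_rule i1))).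
      by apply: contra pe => h; rewrite /pE /imE h.
    have [a b] := dd_dang d1 eG nh vL vK.
    by case: hs => Es; [apply: a|apply: b]; rewrite -Es E.
  have D2 : inDV (gts_rule i2) (Gr hG) g2v s.
    rewrite /inDV /= mem_filter ps sG /=; apply/negP => /delVP[v vL [vK E]].
    have nh : ~~ has (fun e' => g2e e' == e) (gE (rL (gts_rule i2))).
      by apply: contra pe => h; rewrite /pE /imE h orbT.
    have [a b] := dd_dang d2 eG nh vL vK.
    by case: hs => Es; [apply: a|apply: b]; rewrite -Es E.
  have Ps : persistent i1 i2 (Gr hG) g1v g2v s.
    by rewrite /persistent D1 D2 /= mem_filter ps sG.
  have := Hp s Ps; rewrite /= /step_track D1 D2 /=.
  by case: (t1 s) => [m|] [] // _ <-; exists m.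
have hZ : forall e, e \in gE G -> ~~ pE e -> forall s, (s = src G e \/ s = tgt G e) -> pV s ->
   exists2 m, t1 s = Some m & m \in gV M.
  move=> e eG pe s hs ps; have [m [e1 _]] := bnd e eG pe s hs ps.
  by exists m => //; exact: (derivs_track_in dj1 e1).
have hB1 : forall e, e \in gE G -> ~~ pE e -> forall s, (s = src G e \/ s = tgt G e) -> pV s ->
   exists m, t1 s = Some m /\ t1 s = Some m.
  move=> e eG pe s hs ps; have [m [e1 _]] := bnd e eG pe s hs ps.
  by exists m.
have [t1' j1] := ext_derivs dj1 (Hr_sub d1 hG Hp1V) (side_glue d1 hG Hp1V Hp1E hZ hB1).
have [t2' j2] := ext_derivs dj2 (Hr_sub d2 hG Hp2V) (side_glue d2 hG Hp2V Hp2E hZ bnd).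
by exists (Zg hZ), t1', t2'.
Qed.
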